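(* For every fixed $\varepsilon>0$ there is an algorithm with running time $O\big(\big(\frac{1+\varepsilon}{\varepsilon}\big)^k n^{k+1}\big)$ that, given any instance of the Maximum Generalized Assignment Problem with $k$ bins and $n$ items, returns an assignment of a subset of the items to the bins such that for every bin $j$ the total size $\sum s_{ij}$ of the items assigned to bin $j$ is at most $(1+\varepsilon)C_j$, and whose total profit is at least the optimum profit of the instance (with the original capacities $C_j$).
   Context: Maximum Generalized Assignment Problem (GAP): there are $k$ bins with positive integer capacities $C_1,\dots,C_k$ and $n$ items; assigning item $i$ to bin $j$ uses size $s_{ij}$ (a nonnegative integer) and gives profit $p_{ij}$ (a nonnegative integer). A feasible solution assigns a subset of the items, each to exactly one bin, so that for every bin $j$ the total size of the items assigned to $j$ is at most $C_j$; the goal is to maximize the total profit. *)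

(* Defs.v *)
From Stdlib Require Import Reals Arith Lia List.
Open Scope R_scope.

(* An instance: k bins, n items, capacity C j (j < k), size s i j and profit
   p i j of item i (i < n) in bin j.  Only indices below the bounds matter. *)
Record gap_instance := GapInstance {
  gk : nat;
  gn : nat;
  gC : nat -> nat;
  gs : nat -> nat -> nat;
  gp : nat -> nat -> nat
}.

Definition valid_instance (I : gap_instance) : Prop :=
  (1 <= gk I)%nat /\ (1 <= gn I)%nat /\ forall j, (j < gk I)%nat -> (1 <= gC I j)%nat.

(* an assignment: a i = Some j means item i goes to bin j; None = unassigned *)
Definition assignment := nat -> option nat.

Fixpoint sum_below (f : nat -> nat) (m : nat) : nat :=
  match m with O => O | S m' => (sum_below f m' + f m')%nat end.

Definition in_bin (a : assignment) (i j : nat) : bool :=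
  match a i with Some j' => Nat.eqb j' j | None => false end.

Definition bin_load (I : gap_instance) (a : assignment) (j : nat) : nat :=
  sum_below (fun i => if in_bin a i j then gs I i j else O) (gn I).

Definition profit (I : gap_instance) (a : assignment) : nat :=
  sum_below (fun i => match a i with Some j => gp I i j | None => O end) (gn I).

Definition bins_ok (I : gap_instance) (a : assignment) : Prop :=
  forall i j, (i < gn I)%nat -> a i = Some j -> (j < gk I)%nat.

Definition feasible (I : gap_instance) (a : assignment) : Prop :=
  bins_ok I a /\ forall j, (j < gk I)%nat -> (bin_load I a j <= gC I j)%nat.

Definition feasible_relaxed (eps : R) (I : gap_instance) (a : assignment) : Prop :=
  bins_ok I a /\
  forall j, (j < gk I)%nat -> INR (bin_load I a j) <= (1 + eps) * INR (gC I j).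

Definition memory := nat -> nat.

Definition upd (m : memory) (a v : nat) : memory :=
  fun x => if Nat.eqb x a then v else m x.

Inductive instr :=
| IConst (r c : nat)
| IAdd (r x y : nat)
| ISub (r x y : nat)          (* M[r] := M[x] - M[y] (truncated) *)
| IMul (r x y : nat)
| IDiv (r x y : nat)          (* M[r] := M[x] / M[y] (floor; 0 if M[y] = 0) *)
| ILoad (r x : nat)
| IStore (x r : nat)
| IJz (r l : nat)
| IHalt.

Definition program := list instr.
Definition config := (nat * memory)%type.

Definition step (P : program) (c : config) : option config :=
  let (pc, m) := c in
  match nth_error P pc with
  | None => None
  | Some IHalt => None
  | Some (IConst r v) => Some (S pc, upd m r v)
  | Some (IAdd r x y) => Some (S pc, upd m r (m x + m y)%nat)
  | Some (ISub r x y) => Some (S pc, upd m r (m x - m y)%nat)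
  | Some (IMul r x y) => Some (S pc, upd m r (m x * m y)%nat)
  | Some (IDiv r x y) => Some (S pc, upd m r (Nat.div (m x) (m y)))
  | Some (ILoad r x) => Some (S pc, upd m r (m (m x)))
  | Some (IStore x r) => Some (S pc, upd m (m x) (m r))
  | Some (IJz r l) => Some (if Nat.eqb (m r) 0 then l else S pc, m)
  end.

Definition halted (P : program) (c : config) : Prop := step P c = None.

Fixpoint run (P : program) (t : nat) (c : config) : config :=
  match t with
  | O => c
  | S t' => match step P c with None => c | Some c' => run P t' c' end
  end.

(* Input encoding: M[0]=k, M[1]=n, M[2+j]=C_j (j<k),
   M[2+k+i*k+j]=s_{ij}, M[2+k+n*k+i*k+j]=p_{ij}, all other cells 0. *)
Definition init_memory (I : gap_instance) : memory :=
  fun x =>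
    let k := gk I in let n := gn I in
    if Nat.eqb x 0 then k
    else if Nat.eqb x 1 then n
    else if Nat.ltb x (2 + k) then gC I (x - 2)
    else if Nat.ltb x (2 + k + n * k) then
      gs I ((x - 2 - k) / k) ((x - 2 - k) mod k)
    else if Nat.ltb x (2 + k + 2 * n * k) then
      gp I ((x - 2 - k - n * k) / k) ((x - 2 - k - n * k) mod k)
    else 0%nat.

(* Output encoding: on halting, cell 2+k+2nk+i holds 0 if item i is
   unassigned, and j+1 if item i is assigned to bin j. *)
Definition output_base (I : gap_instance) : nat := (2 + gk I + 2 * gn I * gk I)%nat.

Definition decode (I : gap_instance) (m : memory) : assignment :=
  fun i => match m (output_base I + i)%nat with
           | O => None
           | S j => Some j
           end.

(* Main.v *)
Require Import Defs.
From Stdlib Require Import Reals.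
Open Scope R_scope.
From Stdlib Require Import Arith Lia List Bool Lra ZArith.

Module MA.
Import ListNotations.
Local Open Scope nat_scope.

Inductive atom :=
| AConst (r c : nat) | AAdd (r x y : nat) | ASub (r x y : nat)
| AMul (r x y : nat) | ADiv (r x y : nat) | ALoad (r x : nat) | AStore (x r : nat).

Definition ainstr (a : atom) : instr :=
  match a with
  | AConst r c => IConst r c | AAdd r x y => IAdd r x y | ASub r x y => ISub r x y
  | AMul r x y => IMul r x y | ADiv r x y => IDiv r x y | ALoad r x => ILoad r x
  | AStore x r => IStore x r end.

Definition aeff (a : atom) (m : memory) : memory :=
  match a with
  | AConst r c => upd m r c
  | AAdd r x y => upd m r (m x + m y)
  | ASub r x y => upd m r (m x - m y)
  | AMul r x y => upd m r (m x * m y)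
  | ADiv r x y => upd m r (Nat.div (m x) (m y))
  | ALoad r x => upd m r (m (m x))
  | AStore x r => upd m (m x) (m r) end.

Inductive cmd := CA (a : atom) | CSeq (c1 c2 : cmd) | CIf (r : nat) (c1 c2 : cmd)
| CWhile (r : nat) (c : cmd).

Notation TR := 2 (only parsing).

Fixpoint len (c : cmd) : nat :=
  match c with
  | CA _ => 1 | CSeq c1 c2 => len c1 + len c2
  | CIf _ c1 c2 => len c1 + len c2 + 3 | CWhile _ c => len c + 3 end.

Fixpoint compile (c : cmd) (o : nat) : list instr :=
  match c with
  | CA a => [ainstr a]
  | CSeq c1 c2 => compile c1 o ++ compile c2 (o + len c1)
  | CIf r c1 c2 => IJz r (o + 3 + len c2) :: compile c2 (S o) ++
                   [IConst TR 0; IJz TR (o + 3 + len c2 + len c1)] ++ compile c1 (o + 3 + len c2)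
  | CWhile r c => IJz r (o + 3 + len c) :: compile c (S o) ++ [IConst TR 0; IJz TR o]
  end.

Inductive exec : cmd -> memory -> memory -> nat -> Prop :=
| ex_atom a m : exec (CA a) m (aeff a m) 1
| ex_seq c1 c2 m m1 m2 t1 t2 : exec c1 m m1 t1 -> exec c2 m1 m2 t2 -> exec (CSeq c1 c2) m m2 (t1 + t2)
| ex_if0 r c1 c2 m m' t : m r = 0 -> exec c1 m m' t -> exec (CIf r c1 c2) m m' (S t)
| ex_if1 r c1 c2 m m' t : m r <> 0 -> exec c2 m m' t -> exec (CIf r c1 c2) m (upd m' TR 0) (t + 3)
| ex_wh0 r c m : m r = 0 -> exec (CWhile r c) m m 1
| ex_wh1 r c m m1 m2 t1 t2 : m r <> 0 -> exec c m m1 t1 -> exec (CWhile r c) (upd m1 TR 0) m2 t2 ->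
    exec (CWhile r c) m m2 (t1 + 3 + t2).

Lemma comp_len c o : length (compile c o) = len c.
Proof.
  revert o; induction c; intros o; simpl; auto;
  repeat (rewrite ?length_app; simpl); rewrite ?IHc1, ?IHc2, ?IHc; lia.
Qed.

Lemma run_add P a b c : run P (a + b) c = run P b (run P a c).
Proof.
  revert c; induction a; intros c; simpl; auto.
  destruct (step P c) eqn:E; auto.
  clear IHa. revert c E; induction b; intros c E; simpl; auto. rewrite E; auto.
Qed.

Definition embedded (P : program) (o : nat) (l : list instr) :=
  forall i x, nth_error l i = Some x -> nth_error P (o + i) = Some x.

Lemma emb_app1 P o l1 l2 : embedded P o (l1 ++ l2) -> embedded P o l1.
Proof. intros H i x Hx. apply H. rewrite nth_error_app1; auto.
  apply nth_error_Some; congruence. Qed.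
Lemma emb_app2 P o l1 l2 : embedded P o (l1 ++ l2) -> embedded P (o + length l1) l2.
Proof. intros H i x Hx. rewrite <- Nat.add_assoc. apply H.
  rewrite nth_error_app2 by lia. now replace (length l1 + i - length l1) with i by lia. Qed.
Lemma emb_cons1 P o x l : embedded P o (x :: l) -> nth_error P o = Some x.
Proof. intros H. specialize (H 0 x). rewrite Nat.add_0_r in H. auto. Qed.
Lemma emb_cons2 P o x l : embedded P o (x :: l) -> embedded P (S o) l.
Proof. intros H i y Hy. replace (S o + i) with (o + S i) by lia. apply H. auto. Qed.

Lemma emb_eq P o o' l : embedded P o l -> o = o' -> embedded P o' l.
Proof. intros H ->; auto. Qed.

Lemma step_atom P pc m a : nth_error P pc = Some (ainstr a) ->
  step P (pc, m) = Some (S pc, aeff a m).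
Proof. intros H. unfold step. rewrite H. destruct a; reflexivity. Qed.

Lemma run_S P t c c' : step P c = Some c' -> run P (S t) c = run P t c'.
Proof. intros H; simpl; rewrite H; auto. Qed.

Lemma step_jmp P pc l m : nth_error P pc = Some (IConst TR 0) ->
  nth_error P (S pc) = Some (IJz TR l) -> run P 2 (pc, m) = (l, upd m TR 0).
Proof. intros H1 H2. rewrite (run_S _ _ _ (S pc, upd m TR 0)).
  rewrite (run_S _ _ _ (l, upd m TR 0)). reflexivity.
  unfold step. rewrite H2. unfold upd. simpl. reflexivity.
  unfold step. rewrite H1. reflexivity. Qed.

Lemma comp_correct c m m' t : exec c m m' t ->
  forall P o, embedded P o (compile c o) -> run P t (o, m) = (o + len c, m').
Proof.
  induction 1; intros P o HE; simpl in HE.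
  - cbn [run]. rewrite (step_atom _ _ _ _ (emb_cons1 _ _ _ _ HE)). simpl. f_equal; lia.
  - rewrite run_add. rewrite (IHexec1 P o (emb_app1 _ _ _ _ HE)).
    pose proof (emb_app2 _ _ _ _ HE) as H2. rewrite comp_len in H2.
    rewrite (IHexec2 P _ H2). simpl. f_equal; lia.
  - simpl. unfold step. rewrite (emb_cons1 _ _ _ _ HE). rewrite H. simpl.
    pose proof (emb_cons2 _ _ _ _ HE) as H2.
    pose proof (emb_app2 _ _ _ _ H2) as H3. rewrite comp_len in H3.
    pose proof (emb_cons2 _ _ _ _ (emb_cons2 _ _ _ _ H3)) as H4.
    replace (S (S (S o + len c2))) with (o + 3 + len c2) in H4 by lia.
    erewrite IHexec; [|eapply emb_eq; [exact H4|lia]]. f_equal; simpl; lia.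
  - replace (t + 3) with (S (t + 2)) by lia. simpl. unfold step. rewrite (emb_cons1 _ _ _ _ HE).
    destruct (Nat.eqb_spec (m r) 0); [contradiction|].
    pose proof (emb_cons2 _ _ _ _ HE) as H2.
    pose proof (emb_app1 _ _ _ _ H2) as H3. rewrite run_add. erewrite IHexec; [|eapply emb_eq; [exact H3|lia]].
    pose proof (emb_app2 _ _ _ _ H2) as H4. rewrite comp_len in H4.
    pose proof (emb_cons1 _ _ _ _ H4) as I1. pose proof (emb_cons1 _ _ _ _ (emb_cons2 _ _ _ _ H4)) as I2.
    rewrite (step_jmp _ _ _ _ I1 I2). f_equal. lia.
  - simpl. unfold step. rewrite (emb_cons1 _ _ _ _ HE). rewrite H. simpl. f_equal; lia.
  - rewrite run_add. replace (t1 + 3) with (S (t1 + 2)) by lia. simpl. unfold step.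
    rewrite (emb_cons1 _ _ _ _ HE).
    destruct (Nat.eqb_spec (m r) 0); [contradiction|].
    pose proof (emb_cons2 _ _ _ _ HE) as H2.
    pose proof (emb_app1 _ _ _ _ H2) as H3. rewrite run_add. erewrite IHexec1; [|eapply emb_eq; [exact H3|lia]].
    pose proof (emb_app2 _ _ _ _ H2) as H4. rewrite comp_len in H4.
    pose proof (emb_cons1 _ _ _ _ H4) as I1. pose proof (emb_cons1 _ _ _ _ (emb_cons2 _ _ _ _ H4)) as I2.
    rewrite (step_jmp _ _ _ _ I1 I2). apply IHexec2. simpl. exact HE.
Qed.

Definition atarget (a : atom) : list nat :=
  match a with
  | AConst r _ | AAdd r _ _ | ASub r _ _ | AMul r _ _ | ADiv r _ _ | ALoad r _ => [r]
  | AStore _ _ => [] end.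
Definition astore (a : atom) : bool := match a with AStore _ _ => false | _ => true end.

Fixpoint nost (c : cmd) : bool :=
  match c with CA a => astore a | CSeq c1 c2 => nost c1 && nost c2
  | CIf _ c1 c2 => nost c1 && nost c2 | CWhile _ c => nost c end.
Fixpoint wr (c : cmd) : list nat :=
  match c with CA a => atarget a | CSeq c1 c2 => wr c1 ++ wr c2
  | CIf _ c1 c2 => TR :: wr c1 ++ wr c2 | CWhile _ c => TR :: wr c end.

Lemma upd_same m a v x : a = x -> upd m a v x = v.
Proof. intros ->. unfold upd. now rewrite Nat.eqb_refl. Qed.
Lemma upd_other m a v x : a <> x -> upd m a v x = m x.
Proof. intros H. unfold upd. destruct (Nat.eqb_spec x a); auto. congruence. Qed.

Lemma exec_frame c m m' t : exec c m m' t -> nost c = true ->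
  forall x, ~ In x (wr c) -> m' x = m x.
Proof.
  induction 1; simpl; intros Hn x Hx.
  - destruct a; simpl in *; try discriminate; apply upd_other; intuition.
  - apply andb_true_iff in Hn as [H1 H2]. rewrite in_app_iff in Hx.
    rewrite IHexec2, IHexec1; intuition.
  - apply andb_true_iff in Hn as [H1 H2]. rewrite in_app_iff in Hx. apply IHexec; intuition.
  - apply andb_true_iff in Hn as [H1 H2]. rewrite in_app_iff in Hx.
    rewrite upd_other by intuition. apply IHexec; intuition.
  - auto.
  - rewrite IHexec2 by auto. rewrite upd_other by intuition. apply IHexec1; intuition.
Qed.

Definition regs_below (c : cmd) (b : nat) : bool := forallb (fun y => y <? b) (wr c).

Lemma exec_frame_hi c m m' t b : exec c m m' t -> nost c = true -> regs_below c b = true ->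
  forall x, b <= x -> m' x = m x.
Proof.
  intros He Hn Hb x Hx. eapply exec_frame; eauto. intros Hin.
  unfold regs_below in Hb. rewrite forallb_forall in Hb. apply Hb in Hin.
  apply Nat.ltb_lt in Hin. lia.
Qed.

Lemma while_rule r c (Inv : nat -> memory -> Prop) (bc : nat) :
  (forall v m, Inv v m -> (m r = 0 <-> v = 0)) ->
  (forall v m, Inv (S v) m -> exists m1 t1, exec c m m1 t1 /\ Inv v (upd m1 TR 0) /\ t1 <= bc) ->
  forall v m, Inv v m -> exists m' t, exec (CWhile r c) m m' t /\ Inv 0 m' /\ t <= 1 + v * (bc + 3).
Proof.
  intros Hc Hb v. induction v; intros m Hi.
  - exists m, 1. split; [|split; auto; lia]. apply ex_wh0. apply (Hc 0 m Hi). auto.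
  - destruct (Hb v m Hi) as (m1 & t1 & E1 & I1 & T1).
    destruct (IHv _ I1) as (m2 & t2 & E2 & I2 & T2).
    exists m2, (t1 + 3 + t2). split; [|split; auto; simpl; lia].
    eapply ex_wh1; eauto. intros H0. apply (Hc _ _ Hi) in H0. discriminate.
Qed.

Ltac simp_upd := repeat match goal with
  | |- context [upd ?m ?a ?v ?x] =>
      first [ rewrite (upd_same m a v x) by lia | rewrite (upd_other m a v x) by lia ]
  end.
Ltac simp_upd_in H := repeat match type of H with
  | context [upd ?m ?a ?v ?x] =>
      first [ rewrite (upd_same m a v x) in H by lia | rewrite (upd_other m a v x) in H by lia ]
  end.

End MA.

Module MM.
Import MA.
Import ListNotations.
Local Open Scope nat_scope.

Lemma sum_le (f g : nat -> nat) m : (forall i, i < m -> f i <= g i) -> sum_below f m <= sum_below g m.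
Proof. induction m; simpl; intros H; auto. specialize (IHm (fun i Hi => H i (Nat.lt_lt_succ_r _ _ Hi))).
  specialize (H m (Nat.lt_succ_diag_r m)). lia. Qed.
Lemma sum_ext (f g : nat -> nat) m : (forall i, i < m -> f i = g i) -> sum_below f m = sum_below g m.
Proof. induction m; simpl; intros H; auto. rewrite IHm by auto. rewrite H by lia. auto. Qed.
Lemma sum_add (f g : nat -> nat) m : sum_below (fun i => f i + g i) m = sum_below f m + sum_below g m.
Proof. induction m; simpl; auto. rewrite IHm. lia. Qed.
Lemma sum_mul c (f : nat -> nat) m : sum_below (fun i => f i * c) m = sum_below f m * c.
Proof. induction m; simpl; auto. rewrite IHm. lia. Qed.
Lemma sum_ind_le (P : nat -> bool) m : sum_below (fun i => if P i then 1 else 0) m <= m.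
Proof. induction m; simpl; auto. destruct (P m); lia. Qed.
Lemma sum_mono (f : nat -> nat) m1 m2 : m1 <= m2 -> sum_below f m1 <= sum_below f m2.
Proof. induction 1; simpl; lia. Qed.

Section Model.
Variable I : gap_instance.
Variable Nc : nat.

Definition kk := gk I.
Definition nn := gn I.
Definition LL := (nn - 1) * Nc / 2.
Definition BB := LL + 1.
Definition LN := (LL + nn) * Nc.
Definition N2 := Nc + 2.
Definition rr i j := gs I i j * LN / (N2 * gC I j).
Definition digit s j := s / BB ^ j mod BB.

Definition best (x : nat * nat * nat) := fst (fst x).
Definition arg (x : nat * nat * nat) := snd (fst x).
Definition nst (x : nat * nat * nat) := snd x.

Definition binstep (i s : nat) (Vn : nat -> nat) (j : nat) (acc : nat * nat * nat) :=
  if digit s j + rr i j - LL =? 0 then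
    let ns' := rr i j * BB ^ j + s in
    let cand := gp I i j + Vn ns' in
    if cand - best acc =? 0 then acc else (cand, S j, ns')
  else acc.

Fixpoint fb (i s : nat) (Vn : nat -> nat) (j : nat) : nat * nat * nat :=
  match j with O => (Vn s, 0, s) | S j' => binstep i s Vn j' (fb i s Vn j') end.

Fixpoint Vr (d s : nat) : nat :=
  match d with O => 0 | S d' => best (fb (nn - S d') s (Vr d') kk) end.

Definition V i := Vr (nn - i).

Lemma V_S i s : i < nn -> V i s = best (fb i s (V (S i)) kk).
Proof. intros H. unfold V. replace (nn - i) with (S (nn - S i)) by lia. simpl.
  replace (nn - S (nn - S i)) with i by lia. reflexivity. Qed.
Lemma V_n s : V nn s = 0.
Proof. unfold V. rewrite Nat.sub_diag. reflexivity. Qed.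

Definition fits i s j := digit s j + rr i j <= LL.

Lemma fb_spec i s Vn j :
  let x := fb i s Vn j in
  Vn s <= best x /\
  (forall j', j' < j -> fits i s j' -> gp I i j' + Vn (rr i j' * BB ^ j' + s) <= best x) /\
  (arg x = 0 -> best x = Vn s /\ nst x = s) /\
  (forall j', arg x = S j' -> j' < j /\ fits i s j' /\ nst x = rr i j' * BB ^ j' + s /\
       best x = gp I i j' + Vn (nst x)).
Proof.
  induction j; simpl.
  - split; auto. split. intros; lia. split. auto. unfold arg; simpl; discriminate.
  - destruct IHj as (H1 & H2 & H3 & H4).
    unfold binstep. unfold fits in *.
    destruct (Nat.eqb_spec (digit s j + rr i j - LL) 0) as [F|F].
    + cbv zeta.
      destruct (Nat.eqb_spec (gp I i j + Vn (rr i j * BB ^ j + s) - best (fb i s Vn j)) 0) as [G|G].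
      * split; auto. split. intros j' Hj' Hf. destruct (Nat.eq_dec j' j). subst; lia. apply H2; auto; lia.
        split; auto. intros j' Ha. destruct (H4 j' Ha) as (A1&A2&A3&A4). repeat split; auto.
      * unfold best, arg, nst; simpl. split. fold (best (fb i s Vn j)). lia.
        split. intros j' Hj' Hf. destruct (Nat.eq_dec j' j). subst; lia.
        specialize (H2 j' ltac:(lia) Hf). fold (best (fb i s Vn j)) in *. lia.
        split. discriminate. intros j' E. injection E; intros; subst. repeat split; auto; lia.
    + split; auto. split. intros j' Hj' Hf. destruct (Nat.eq_dec j' j). subst; lia. apply H2; auto; lia.
      split; auto. intros j' Ha. destruct (H4 j' Ha) as (A1&A2&A3&A4). repeat split; auto.
Qed.

Lemma powpos B j : 0 < B -> 0 < B ^ j.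
Proof. intros H. pose proof (Nat.pow_nonzero B j). lia. Qed.

Lemma encb_lt B (l : nat -> nat) k : (forall j, j < k -> l j < B) ->
  sum_below (fun j => l j * B ^ j) k < B ^ k.
Proof.
  induction k; simpl; intros H. lia.
  specialize (IHk (fun j Hj => H j ltac:(lia))). specialize (H k ltac:(lia)).
  assert (l k * B ^ k <= (B - 1) * B ^ k) by (apply Nat.mul_le_mono_r; lia).
  destruct B. lia. replace (S B - 1) with B in H0 by lia. simpl. nia.
Qed.

Lemma encb_decomp B (l : nat -> nat) k j : j < k ->
  exists X, sum_below (fun j => l j * B ^ j) k =
            sum_below (fun j => l j * B ^ j) j + B ^ j * (l j + B * X).
Proof.
  induction k; intros Hj. lia.
  destruct (Nat.eq_dec j k).
  - subst. exists 0. simpl. lia.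
  - destruct (IHk ltac:(lia)) as [X HX]. exists (X + l k * B ^ (k - j - 1)).
    simpl. rewrite HX.
    replace (B ^ k) with (B ^ j * (B * B ^ (k - j - 1))) at 1.
    nia. rewrite <- Nat.pow_succ_r', <- Nat.pow_add_r. f_equal. lia.
Qed.

Lemma encb_digit B (l : nat -> nat) k j : 0 < B -> (forall j, j < k -> l j < B) -> j < k ->
  sum_below (fun j => l j * B ^ j) k / B ^ j mod B = l j.
Proof.
  intros HB H Hj. destruct (encb_decomp B l k j Hj) as [X ->].
  pose proof (encb_lt B l j (fun j' Hj' => H j' ltac:(lia))).
  pose proof (powpos B j HB).
  rewrite Nat.mul_comm. rewrite Nat.div_add by lia. rewrite Nat.div_small by lia. simpl.
  rewrite Nat.mul_comm. rewrite Nat.Div0.mod_add by lia. apply Nat.mod_small. apply H; auto.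
Qed.

Lemma encb_upd B (l l' : nat -> nat) k j r : j < k ->
  (forall j', l' j' = l j' + (if j' =? j then r else 0)) ->
  sum_below (fun j => l' j * B ^ j) k = r * B ^ j + sum_below (fun j => l j * B ^ j) k.
Proof.
  intros Hj Hl. induction k. lia. simpl. rewrite Hl.
  destruct (Nat.eq_dec j k).
  - subst. rewrite Nat.eqb_refl. rewrite (sum_ext _ (fun j => l j * B ^ j)).
    lia. intros i Hi. rewrite Hl. destruct (Nat.eqb_spec i k); lia.
  - rewrite IHk by lia. destruct (Nat.eqb_spec k j); lia.
Qed.

Lemma state_bound B k s j r : 0 < B -> s < B ^ k -> j < k -> s / B ^ j mod B + r <= B - 1 ->
  r * B ^ j + s < B ^ k.
Proof.
  intros HB Hs Hj Hd.
  pose proof (powpos B j HB) as Pj.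
  set (q := s / B ^ j).
  assert (Hs1 : s = B ^ j * q + s mod B ^ j) by (apply Nat.div_mod; lia).
  assert (Hlo : s mod B ^ j < B ^ j) by (apply Nat.mod_upper_bound; lia).
  assert (Ek : B ^ k = B ^ j * (B * B ^ (k - j - 1))).
  { rewrite <- Nat.pow_succ_r', <- Nat.pow_add_r. f_equal. lia. }
  assert (Hq : q < B * B ^ (k - j - 1)).
  { unfold q. apply Nat.Div0.div_lt_upper_bound. lia. }
  assert (Hq2 : q = B * (q / B) + q mod B) by (apply Nat.div_mod; lia).
  assert (Hq3 : q / B < B ^ (k - j - 1)).
  { apply Nat.Div0.div_lt_upper_bound. lia. }
  fold q in Hd.
  assert (q + r < B * B ^ (k - j - 1)).
  { assert (q / B + 1 <= B ^ (k - j - 1)) by lia. nia. }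
  rewrite Ek. nia.
Qed.

Definition enc (l : nat -> nat) := sum_below (fun j => l j * BB ^ j) kk.
Definition lam (b : assignment) i j := sum_below (fun i' => if in_bin b i' j then rr i' j else 0) i.
Definition fb_f (i : nat) (b : assignment) := match b i with Some j => gp I i j | None => 0 end.

Lemma BB_pos : 0 < BB. Proof. unfold BB; lia. Qed.

Lemma LL_spec : (nn - 1) * Nc < 2 * (LL + 1).
Proof. unfold LL. pose proof (Nat.div_mod ((nn - 1) * Nc) 2 ltac:(lia)).
  pose proof (Nat.mod_upper_bound ((nn - 1) * Nc) 2 ltac:(lia)). lia. Qed.

Lemma LN_lt : 1 <= nn -> LN < (LL + 1) * N2.
Proof. intros H. pose proof LL_spec. unfold LN, N2. nia. Qed.

Lemma divmul_le a b : 0 < b -> a / b * b <= a.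
Proof. intros H. pose proof (Nat.div_mod a b ltac:(lia)). nia. Qed.
Lemma divmul_gt a b : 0 < b -> a < (a / b + 1) * b.
Proof. intros H. pose proof (Nat.div_mod a b ltac:(lia)).
  pose proof (Nat.mod_upper_bound a b ltac:(lia)). nia. Qed.

Hypothesis Hvalid : valid_instance I.

Lemma kk_pos : 1 <= kk. Proof. destruct Hvalid as (A&B&C). exact A. Qed.
Lemma nn_pos : 1 <= nn. Proof. destruct Hvalid as (A&B&C). exact B. Qed.
Lemma C_pos j : j < kk -> 1 <= gC I j. Proof. destruct Hvalid as (A&B&C). apply C. Qed.

Lemma lam_bound b j : feasible I b -> j < kk -> lam b nn j <= LL.
Proof.
  intros [Hok Hld] Hj. specialize (Hld j Hj). pose proof (C_pos j Hj) as HC.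
  assert (A : lam b nn j * (N2 * gC I j) <= bin_load I b j * LN).
  { unfold lam, bin_load. rewrite <- !sum_mul. apply sum_le. intros i Hi.
    destruct (in_bin b i j). unfold rr. apply divmul_le. unfold N2; nia. lia. }
  assert (B : bin_load I b j * LN <= gC I j * LN) by (apply Nat.mul_le_mono_r; exact Hld).
  pose proof (LN_lt nn_pos).
  assert (lam b nn j * (N2 * gC I j) < (LL + 1) * (N2 * gC I j)) by nia.
  apply Nat.mul_lt_mono_pos_r in H0. lia. unfold N2; nia.
Qed.

Lemma lam_mono b i1 i2 j : i1 <= i2 -> lam b i1 j <= lam b i2 j.
Proof. intros; apply sum_mono; auto. Qed.

Lemma enc_digit l j : (forall j, j < kk -> l j <= LL) -> j < kk -> digit (enc l) j = l j.
Proof. intros H Hj. unfold digit, enc. apply encb_digit; auto. apply BB_pos.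
  intros j' Hj'. specialize (H j' Hj'). unfold BB; lia. Qed.

Lemma enc_zero : enc (fun _ => 0) = 0.
Proof. unfold enc. generalize kk. induction n; simpl in *; lia. Qed.


Lemma opt_main b : feasible I b -> forall d, d <= nn ->
  sum_below (fun i => fb_f i b) nn <=
  sum_below (fun i => fb_f i b) (nn - d) + V (nn - d) (enc (lam b (nn - d))).
Proof.
  intros Hf d. induction d; intros Hd.
  - rewrite Nat.sub_0_r. lia.
  - set (i := nn - S d). assert (Ei : nn - d = S i) by (unfold i; lia).
    specialize (IHd ltac:(lia)). rewrite Ei in IHd. simpl in IHd.
    assert (Hi : i < nn) by lia.
    rewrite (V_S i _ Hi).
    pose proof (fb_spec i (enc (lam b i)) (V (S i)) kk) as (H1 & H2 & _).
    unfold fb_f in IHd |- *. destruct (b i) as [j|] eqn:Eb.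
    + assert (Hj : j < kk) by (destruct Hf as [Hok _]; apply (Hok i j Hi Eb)).
      assert (Hl : forall j', j' < kk -> lam b i j' <= LL).
      { intros j' Hj'. pose proof (lam_bound b j' Hf Hj'). pose proof (lam_mono b i nn j' ltac:(lia)). lia. }
      assert (Hup : forall j', lam b (S i) j' = lam b i j' + (if j' =? j then rr i j else 0)).
      { intros j'. unfold lam at 1. simpl. fold (lam b i j'). unfold in_bin. rewrite Eb.
        destruct (Nat.eqb_spec j j'); destruct (Nat.eqb_spec j' j); subst; auto; lia. }
      assert (Hfit : fits i (enc (lam b i)) j).
      { unfold fits. rewrite enc_digit by auto. pose proof (lam_bound b j Hf Hj).
        pose proof (lam_mono b (S i) nn j ltac:(lia)). rewrite Hup, Nat.eqb_refl in H0. lia. }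
      specialize (H2 j Hj Hfit).
      assert (Henc : enc (lam b (S i)) = rr i j * BB ^ j + enc (lam b i)).
      { unfold enc. apply encb_upd; auto. }
      rewrite Henc in IHd. lia.
    + assert (Henc : enc (lam b (S i)) = enc (lam b i)).
      { unfold enc. apply sum_ext. intros j' _. f_equal. unfold lam. simpl. unfold in_bin at 2. rewrite Eb. lia. }
      rewrite Henc in IHd. lia.
Qed.

Lemma opt_b b : feasible I b -> profit I b <= V 0 0.
Proof.
  intros Hf. pose proof (opt_main b Hf nn (le_n _)). rewrite Nat.sub_diag in H. simpl in H.
  assert (E0 : enc (lam b 0) = enc (fun _ => 0)) by (unfold enc; apply sum_ext; reflexivity).
  rewrite E0, enc_zero in H. unfold profit. fold nn. exact H.
Qed.

Fixpoint rs (i : nat) : nat :=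
  match i with 0 => 0 | S i' => nst (fb i' (rs i') (V (S i')) kk) end.
Definition asg : assignment := fun i =>
  match arg (fb i (rs i) (V (S i)) kk) with 0 => None | S j => Some j end.

Lemma lam_S b i j : lam b (S i) j = lam b i j + (if in_bin b i j then rr i j else 0).
Proof. reflexivity. Qed.

Lemma rec_profit i : i <= nn -> sum_below (fun i => fb_f i asg) i + V i (rs i) = V 0 0.
Proof.
  induction i; intros Hi. reflexivity.
  rewrite <- IHi by lia. cbn [sum_below rs]. rewrite (V_S i (rs i)) by lia.
  pose proof (fb_spec i (rs i) (V (S i)) kk) as (_ & _ & H3 & H4).
  assert (Hf : fb_f i asg = match arg (fb i (rs i) (V (S i)) kk) with 0 => 0 | S j => gp I i j end)
    by (unfold fb_f, asg; destruct (arg (fb i (rs i) (V (S i)) kk)); auto).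
  rewrite Hf. destruct (arg (fb i (rs i) (V (S i)) kk)) eqn:Ea.
  - destruct (H3 eq_refl) as [H H0]. rewrite H0, H. lia.
  - destruct (H4 n eq_refl) as (A1 & A2 & A3 & A4). lia.
Qed.

Lemma rec_state i : i <= nn -> rs i = enc (lam asg i) /\ forall j, j < kk -> lam asg i j <= LL.
Proof.
  induction i; intros Hi.
  - split. assert (E0 : enc (lam asg 0) = enc (fun _ => 0)) by (unfold enc; apply sum_ext; reflexivity).
    rewrite E0, enc_zero. reflexivity. intros; unfold lam; simpl; lia.
  - destruct (IHi ltac:(lia)) as [E1 E2]. simpl.
    pose proof (fb_spec i (rs i) (V (S i)) kk) as (_ & _ & H3 & H4).
    destruct (arg (fb i (rs i) (V (S i)) kk)) eqn:Ea.
    + destruct (H3 eq_refl) as [_ ->].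
      assert (Hl : forall j, lam asg (S i) j = lam asg i j).
      { intros j. rewrite lam_S. unfold in_bin, asg. rewrite Ea. lia. }
      split. rewrite E1. unfold enc. apply sum_ext. intros. rewrite Hl. auto.
      intros j Hj. rewrite Hl. auto.
    + destruct (H4 n eq_refl) as (A1 & A2 & A3 & A4). rewrite A3.
      assert (Hup : forall j', lam asg (S i) j' = lam asg i j' + (if j' =? n then rr i n else 0)).
      { intros j'. rewrite lam_S. unfold in_bin, asg. rewrite Ea.
        destruct (Nat.eqb_spec n j'); destruct (Nat.eqb_spec j' n); subst; auto; lia. }
      unfold fits in A2. rewrite E1, enc_digit in A2 by auto.
      split. unfold enc. rewrite E1. symmetry. apply encb_upd; auto.
      intros j Hj. rewrite Hup. destruct (Nat.eqb_spec j n). subst; lia. specialize (E2 j Hj); lia.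
Qed.

Lemma asg_ok : bins_ok I asg.
Proof.
  intros i j Hi Ea. unfold asg in Ea.
  pose proof (fb_spec i (rs i) (V (S i)) kk) as (_ & _ & H3 & H4).
  destruct (arg (fb i (rs i) (V (S i)) kk)) eqn:E. discriminate. injection Ea; intros; subst.
  destruct (H4 j eq_refl); auto.
Qed.

Lemma asg_profit b : feasible I b -> profit I b <= profit I asg.
Proof.
  intros Hf. pose proof (opt_b b Hf). pose proof (rec_profit nn (le_n _)).
  rewrite V_n in H0. unfold profit in *. fold nn in *. unfold fb_f in H0. lia.
Qed.

Lemma asg_load j : j < kk -> bin_load I asg j * Nc <= N2 * gC I j.
Proof.
  intros Hj. pose proof (C_pos j Hj) as HC.
  destruct (rec_state nn (le_n _)) as [_ Hl]. specialize (Hl j Hj).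
  assert (A : bin_load I asg j * LN <=
    sum_below (fun i => (if in_bin asg i j then rr i j else 0) * (N2 * gC I j) +
                        (if in_bin asg i j then 1 else 0) * (N2 * gC I j)) nn).
  { unfold bin_load. rewrite <- sum_mul. apply sum_le. intros i Hi.
    destruct (in_bin asg i j). unfold rr. pose proof (divmul_gt (gs I i j * LN) (N2 * gC I j)).
    assert (0 < N2 * gC I j) by (unfold N2; nia). specialize (H H0). lia. lia. }
  rewrite sum_add, !sum_mul in A. fold (lam asg nn j) in A.
  pose proof (sum_ind_le (fun i => in_bin asg i j) nn).
  set (X := N2 * gC I j) in *. set (cnt := sum_below (fun i => if in_bin asg i j then 1 else 0) nn) in *.
  assert (lam asg nn j * X <= LL * X) by (apply Nat.mul_le_mono_r; auto).
  assert (cnt * X <= nn * X) by (apply Nat.mul_le_mono_r; auto).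
  assert (B : bin_load I asg j * LN <= (LL + nn) * X) by lia.
  unfold LN in B. pose proof nn_pos.
  assert (HH : bin_load I asg j * Nc * (LL + nn) <= X * (LL + nn)) by (rewrite Nat.mul_comm with (n:=X); rewrite <- Nat.mul_assoc, (Nat.mul_comm Nc); exact B).
  apply Nat.mul_le_mono_pos_r in HH; unfold X in HH; lia.
Qed.

End Model.

End MM.

Module MP.
Import MA.
Import MM.
Import ListNotations.
Local Open Scope nat_scope.

Coercion CA : atom >-> cmd.
Notation "a ;; b" := (CSeq a b) (at level 100, right associativity).

Lemma init_0 I : init_memory I 0 = gk I. Proof. reflexivity. Qed.
Lemma init_1 I : init_memory I 1 = gn I. Proof. reflexivity. Qed.
Lemma init_C I j : 1 <= gk I -> j < gk I -> init_memory I (2 + j) = gC I j.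
Proof. intros Hk Hj. unfold init_memory. cbv zeta.
  replace (Nat.eqb (2 + j) 0) with false by (symmetry; apply Nat.eqb_neq; lia).
  replace (Nat.eqb (2 + j) 1) with false by (symmetry; apply Nat.eqb_neq; lia).
  replace (Nat.ltb (2 + j) (2 + gk I)) with true by (symmetry; apply Nat.ltb_lt; lia).
  f_equal; lia. Qed.
Lemma divmod_ij i j k : j < k -> (i * k + j) / k = i /\ (i * k + j) mod k = j.
Proof. intros H. split.
  rewrite Nat.div_add_l by lia. rewrite Nat.div_small by lia. lia.
  rewrite Nat.add_comm, Nat.Div0.mod_add. apply Nat.mod_small; lia. Qed.
Lemma init_s I i j : 1 <= gk I -> i < gn I -> j < gk I ->
  init_memory I (2 + gk I + (i * gk I + j)) = gs I i j.
Proof. intros Hk Hi Hj. unfold init_memory. cbv zeta.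
  replace (Nat.eqb _ 0) with false by (symmetry; apply Nat.eqb_neq; lia).
  replace (Nat.eqb _ 1) with false by (symmetry; apply Nat.eqb_neq; lia).
  replace (Nat.ltb _ (2 + gk I)) with false by (symmetry; apply Nat.ltb_ge; lia).
  replace (Nat.ltb _ (2 + gk I + gn I * gk I)) with true by (symmetry; apply Nat.ltb_lt; nia).
  replace (2 + gk I + (i * gk I + j) - 2 - gk I) with (i * gk I + j) by lia.
  destruct (divmod_ij i j (gk I) Hj) as [-> ->]. auto. Qed.
Lemma init_p I i j : 1 <= gk I -> i < gn I -> j < gk I ->
  init_memory I (2 + gk I + gn I * gk I + (i * gk I + j)) = gp I i j.
Proof. intros Hk Hi Hj. unfold init_memory. cbv zeta.
  replace (Nat.eqb _ 0) with false by (symmetry; apply Nat.eqb_neq; lia).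
  replace (Nat.eqb _ 1) with false by (symmetry; apply Nat.eqb_neq; lia).
  replace (Nat.ltb _ (2 + gk I)) with false by (symmetry; apply Nat.ltb_ge; lia).
  replace (Nat.ltb _ (2 + gk I + gn I * gk I)) with false by (symmetry; apply Nat.ltb_ge; nia).
  replace (Nat.ltb _ (2 + gk I + 2 * gn I * gk I)) with true by (symmetry; apply Nat.ltb_lt; nia).
  replace (2 + gk I + gn I * gk I + (i * gk I + j) - 2 - gk I - gn I * gk I) with (i * gk I + j) by lia.
  destruct (divmod_ij i j (gk I) Hj) as [-> ->]. auto. Qed.
Lemma init_hi I x : 2 + gk I + 2 * gn I * gk I <= x -> init_memory I x = 0.
Proof. intros H. unfold init_memory. cbv zeta.
  replace (Nat.eqb _ 0) with false by (symmetry; apply Nat.eqb_neq; lia).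
  replace (Nat.eqb _ 1) with false by (symmetry; apply Nat.eqb_neq; lia).
  replace (Nat.ltb _ (2 + gk I)) with false by (symmetry; apply Nat.ltb_ge; lia).
  replace (Nat.ltb _ (2 + gk I + gn I * gk I)) with false by (symmetry; apply Nat.ltb_ge; nia).
  replace (Nat.ltb _ (2 + gk I + 2 * gn I * gk I)) with false by (symmetry; apply Nat.ltb_ge; nia).
  auto. Qed.

Definition SKIP : cmd := AConst 2 0.

Definition INNER : cmd :=
  ADiv 27 16 18 ;; ADiv 28 27 5 ;; AMul 28 28 5 ;; ASub 27 27 28 ;;
  AAdd 28 14 17 ;; ALoad 29 28 ;; AMul 29 8 29 ;;
  AMul 28 15 3 ;; AAdd 28 28 17 ;; AAdd 28 28 12 ;; ALoad 30 28 ;; AMul 30 30 7 ;; ADiv 30 30 29 ;;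
  AAdd 27 27 30 ;; ASub 27 27 6 ;;
  CIf 27
    (AMul 28 15 3 ;; AAdd 28 28 17 ;; AAdd 28 28 13 ;; ALoad 29 28 ;;
     AMul 30 30 18 ;; AAdd 30 30 16 ;;
     AAdd 28 23 30 ;; ALoad 28 28 ;; AAdd 29 29 28 ;;
     ASub 28 29 19 ;;
     CIf 28 SKIP (AConst 19 0 ;; AAdd 19 19 29 ;; AAdd 20 17 9 ;; AConst 21 0 ;; AAdd 21 21 30))
    SKIP ;;
  AAdd 17 17 9 ;; AMul 18 18 5 ;; ASub 22 22 9.

Definition BODY : cmd :=
  AAdd 28 23 16 ;; ALoad 19 28 ;; AConst 20 0 ;; AConst 21 0 ;; AAdd 21 21 16 ;;
  AConst 17 0 ;; AConst 18 1 ;; AConst 22 0 ;; AAdd 22 22 3 ;;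
  CWhile 22 INNER.

Definition MID : cmd :=
  BODY ;; AAdd 28 24 16 ;; AStore 28 19 ;; AAdd 16 16 9 ;; ASub 25 25 9.

Definition LAYER : cmd :=
  ASub 15 26 9 ;; AMul 24 15 10 ;; AAdd 24 24 11 ;; AAdd 23 24 10 ;; AConst 16 0 ;;
  AConst 25 0 ;; AAdd 25 25 10 ;;
  CWhile 25 MID ;;
  ASub 26 26 9.

Definition RBODY : cmd :=
  AMul 24 15 10 ;; AAdd 24 24 11 ;; AAdd 23 24 10 ;; BODY ;;
  AAdd 28 31 15 ;; AStore 28 20 ;; AConst 16 0 ;; AAdd 16 16 21 ;; AAdd 15 15 9 ;; ASub 26 26 9.

Definition SETUP (Nc : nat) : cmd :=
  ALoad 3 1 ;; AConst 9 1 ;; AAdd 28 1 9 ;; ALoad 4 28 ;;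
  ASub 27 4 9 ;; AConst 28 Nc ;; AMul 27 27 28 ;; AConst 28 2 ;; ADiv 6 27 28 ;;
  AAdd 5 6 9 ;;
  AAdd 27 6 4 ;; AConst 28 Nc ;; AMul 7 27 28 ;;
  AConst 8 (Nc + 2) ;;
  AConst 28 2 ;; AAdd 14 1 28 ;; AAdd 12 14 3 ;; AMul 28 4 3 ;; AAdd 13 12 28 ;;
  AMul 27 4 3 ;; AAdd 27 27 27 ;; AAdd 27 27 12 ;; AConst 28 7 ;; AAdd 11 27 28 ;;
  AConst 10 1 ;; AConst 22 0 ;; AAdd 22 22 3 ;; CWhile 22 (AMul 10 10 5 ;; ASub 22 22 9) ;;
  AAdd 27 4 9 ;; AMul 27 27 10 ;; AAdd 31 11 27.

Definition DPC : cmd := AConst 26 0 ;; AAdd 26 26 4 ;; CWhile 26 LAYER.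

Definition RECON : cmd := AConst 15 0 ;; AConst 16 0 ;; AConst 26 0 ;; AAdd 26 26 4 ;; CWhile 26 RBODY.

Definition FINAL : cmd :=
  ASub 27 11 1 ;; AConst 28 7 ;; ASub 27 27 28 ;;
  AConst 3 0 ;; AAdd 3 3 4 ;; AConst 4 0 ;; AAdd 4 4 31 ;; AConst 0 0 ;; AAdd 0 0 27 ;; AConst 1 1 ;;
  CWhile 3 (ALoad 2 4 ;; AStore 0 2 ;; AAdd 4 4 1 ;; AAdd 0 0 1 ;; ASub 3 3 1).

Definition PHASE0 : cmd :=
  AMul 1 1 0 ;; AAdd 1 1 1 ;; AAdd 1 1 1 ;; AAdd 1 1 1 ;; AAdd 1 1 1 ;; AAdd 1 1 1 ;; AAdd 1 1 1 ;;
  AStore 1 2 ;;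
  AConst 2 3 ;; AAdd 2 1 2 ;; AStore 2 3 ;;
  AConst 2 4 ;; AAdd 2 1 2 ;; AStore 2 4 ;;
  AConst 2 5 ;; AAdd 2 1 2 ;; AStore 2 5 ;;
  AConst 2 6 ;; AAdd 2 1 2 ;; AStore 2 6 ;;
  ALoad 3 1 ;; AConst 2 2 ;; AAdd 2 1 2 ;; AStore 2 3 ;;
  AStore 1 0 ;;
  AConst 3 64 ;; AMul 3 3 0 ;; ADiv 4 1 3 ;; AConst 2 1 ;; AAdd 2 1 2 ;; AStore 2 4 ;;
  AMul 5 4 0 ;; AAdd 5 5 5 ;; AAdd 5 5 0 ;; AConst 6 2 ;; AAdd 5 5 6 ;; AConst 6 7 ;; ASub 3 5 6 ;;
  AConst 4 7 ;; AAdd 5 1 4 ;; AConst 6 1 ;;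
  CWhile 3 (ALoad 2 4 ;; AStore 5 2 ;; AAdd 4 4 6 ;; AAdd 5 5 6 ;; ASub 3 3 6).

Definition MAIN (Nc : nat) : cmd := PHASE0 ;; SETUP Nc ;; DPC ;; RECON ;; FINAL.

Lemma seqA (a : atom) c m (Q : memory -> nat -> Prop) :
  (exists m' t, exec c (aeff a m) m' t /\ Q m' (1 + t)) ->
  exists m' t, exec (CSeq (CA a) c) m m' t /\ Q m' t.
Proof. intros (m' & t & E & H). exists m', (1 + t). split; auto. eapply ex_seq; eauto. constructor. Qed.

Lemma lastA (a : atom) m (Q : memory -> nat -> Prop) :
  Q (aeff a m) 1 -> exists m' t, exec (CA a) m m' t /\ Q m' t.
Proof. intros H. exists (aeff a m), 1. split; auto. constructor. Qed.

Lemma seqC c1 c2 m (R : memory -> nat -> Prop) (Q : memory -> nat -> Prop) :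
  (exists m1 t1, exec c1 m m1 t1 /\ R m1 t1) ->
  (forall m1 t1, R m1 t1 -> exists m2 t2, exec c2 m1 m2 t2 /\ Q m2 (t1 + t2)) ->
  exists m2 t, exec (CSeq c1 c2) m m2 t /\ Q m2 t.
Proof. intros (m1 & t1 & E1 & H1) H2. destruct (H2 _ _ H1) as (m2 & t2 & E2 & H3).
  exists m2, (t1 + t2). split; auto. eapply ex_seq; eauto. Qed.

Lemma ifT r c1 c2 m (Q : memory -> nat -> Prop) : m r = 0 ->
  (exists m' t, exec c1 m m' t /\ Q m' (S t)) -> exists m' t, exec (CIf r c1 c2) m m' t /\ Q m' t.
Proof. intros H (m' & t & E & H1). exists m', (S t). split; auto. apply ex_if0; auto. Qed.
Lemma ifF r c1 c2 m (Q : memory -> nat -> Prop) : m r <> 0 ->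
  (exists m' t, exec c2 m m' t /\ Q (upd m' TR 0) (t + 3)) -> exists m' t, exec (CIf r c1 c2) m m' t /\ Q m' t.
Proof. intros H (m' & t & E & H1). exists (upd m' TR 0), (t + 3). split; auto. apply ex_if1; auto. Qed.





Lemma seq_inv c1 c2 m m' t : exec (CSeq c1 c2) m m' t ->
  exists m1 t1 t2, exec c1 m m1 t1 /\ exec c2 m1 m' t2 /\ t = t1 + t2.
Proof. intros E; inversion E; subst; eauto 7. Qed.
Lemma atom_inv a m m' t : exec (CA a) m m' t -> m' = aeff a m /\ t = 1.
Proof. intros E; inversion E; subst; auto. Qed.

Lemma seqIfT r c1 c2 rest m (Q : memory -> nat -> Prop) : m r = 0 ->
  (exists m' t, exec (CSeq c1 rest) m m' t /\ Q m' (S t)) ->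
  exists m' t, exec (CSeq (CIf r c1 c2) rest) m m' t /\ Q m' t.
Proof. intros H (m' & t & E & H1). apply seq_inv in E as (m1 & t1 & t2 & E1 & E2 & ->).
  exists m', (S t1 + t2). split; [|simpl; auto]. eapply ex_seq; eauto. apply ex_if0; auto. Qed.
Lemma seqIfF r c1 c2 rest m (Q : memory -> nat -> Prop) : m r <> 0 ->
  (exists m' t, exec (CSeq c2 (CSeq (CA (AConst TR 0)) rest)) m m' t /\ Q m' (t + 2)) ->
  exists m' t, exec (CSeq (CIf r c1 c2) rest) m m' t /\ Q m' t.
Proof. intros H (m' & t & E & H1). apply seq_inv in E as (m1 & t1 & t2 & E1 & E2 & ->).
  apply seq_inv in E2 as (m2 & t3 & t4 & E3 & E4 & ->). apply atom_inv in E3 as [-> ->].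
  exists m', (t1 + 3 + t4). split; [|replace (t1 + 3 + t4) with (t1 + (1 + t4) + 2) by lia; auto].
  eapply ex_seq; eauto. apply ex_if1; auto. Qed.

Lemma seq_assoc a b c m (Q : memory -> nat -> Prop) :
  (exists m' t, exec (CSeq a (CSeq b c)) m m' t /\ Q m' t) ->
  exists m' t, exec (CSeq (CSeq a b) c) m m' t /\ Q m' t.
Proof. intros (m' & t & E & H). apply seq_inv in E as (m1 & t1 & t2 & E1 & E2 & ->).
  apply seq_inv in E2 as (m2 & t3 & t4 & E3 & E4 & ->). exists m', (t1 + t3 + t4). split.
  eapply ex_seq; eauto. eapply ex_seq; eauto. now rewrite <- Nat.add_assoc. Qed.

Ltac stepA := apply seqA; cbn [aeff].
Ltac stepsA := repeat (first [apply seq_assoc | stepA; simp_upd]).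

Ltac ifA Hc := match goal with |- exists _ _, exec (CSeq (CIf ?r _ _) _) ?mm _ _ /\ _ =>
  destruct (Nat.eqb_spec (mm r) 0) as [Hc|Hc]; [apply seqIfT; [exact Hc|] | apply seqIfF; [exact Hc|]];
  simp_upd_in Hc end.

Section Mach.
Variable I : gap_instance.
Variable Nc : nat.
Hypothesis Hvalid : valid_instance I.

Local Notation k := (kk I).
Local Notation n := (nn I).
Local Notation B := (BB I Nc).
Local Notation L := (LL I Nc).
Definition Dv := 64 * (nn I * kk I).
Definition Ev := 2 + kk I + 2 * nn I * kk I.
Definition TVv := Dv + Ev + 7.
Definition Sv := BB I Nc ^ kk I.
Definition OBv := TVv + (nn I + 1) * Sv.

Definition Cst (m : memory) : Prop :=
  m 1 = Dv /\ m 3 = k /\ m 4 = n /\ m 5 = B /\ m 6 = L /\ m 7 = LN I Nc /\ m 8 = N2 Nc /\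
  m 9 = 1 /\ m 10 = Sv /\ m 11 = TVv /\ m 12 = Dv + 2 + k /\ m 13 = Dv + 2 + k + n * k /\
  m 14 = Dv + 2 /\ m 31 = OBv.
Definition Inp (m : memory) : Prop := forall x, x < Ev -> m (Dv + x) = init_memory I x.
Definition Lay (i : nat) (m : memory) : Prop := forall s, s < Sv -> m (TVv + i * Sv + s) = V I Nc i s.

Lemma Dv_ge : 64 <= Dv.
Proof. destruct Hvalid as (A & B & _). unfold Dv, kk, nn. nia. Qed.
Lemma Sv_pos : 1 <= Sv.
Proof. unfold Sv. pose proof (powpos (BB I Nc) (kk I) (BB_pos I Nc)). lia. Qed.

Lemma digit_eq s j : digit I Nc s j = s / B ^ j - s / B ^ j / B * B.
Proof. unfold digit. rewrite Nat.mod_eq. lia. pose proof (BB_pos I Nc). lia. Qed.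

Lemma inner_step m i s j v :
  Cst m -> Inp m -> Lay (S i) m -> i < n -> s < Sv -> m 15 = i -> m 16 = s ->
  m 23 = TVv + S i * Sv -> m 17 = j -> m 18 = B ^ j -> m 22 = S v -> j < k ->
  m 19 = best (fb I Nc i s (V I Nc (S i)) j) -> m 20 = arg (fb I Nc i s (V I Nc (S i)) j) ->
  m 21 = nst (fb I Nc i s (V I Nc (S i)) j) ->
  exists m' t, exec INNER m m' t /\
    (m' 17 = S j /\ m' 18 = B ^ S j /\ m' 22 = v /\
     m' 19 = best (fb I Nc i s (V I Nc (S i)) (S j)) /\ m' 20 = arg (fb I Nc i s (V I Nc (S i)) (S j)) /\
     m' 21 = nst (fb I Nc i s (V I Nc (S i)) (S j))) /\ t <= 50.
Proof.
  intros Hc Hin Hl Hi Hs R15 R16 R23 R17 R18 R22 Hj R19 R20 R21.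
  pose proof Dv_ge as HD. assert (HTV : 64 <= TVv) by (unfold TVv; lia).
  destruct Hc as (C1 & C3 & C4 & C5 & C6 & C7 & C8 & C9 & C10 & C11 & C12 & C13 & C14 & C31).
  assert (HCj : m (Dv + 2 + j) = gC I j).
  { replace (Dv + 2 + j) with (Dv + (2 + j)) by lia. rewrite Hin by (unfold Ev; lia).
    apply init_C; auto; destruct Hvalid; tauto. }
  assert (Hsij : m (i * k + j + (Dv + 2 + k)) = gs I i j).
  { replace (i * k + j + (Dv + 2 + k)) with (Dv + (2 + gk I + (i * gk I + j))) by (unfold kk; lia).
    rewrite Hin by (unfold Ev, kk, nn in *; nia). apply init_s; auto; destruct Hvalid; tauto. }
  assert (Hpij : m (i * k + j + (Dv + 2 + k + n * k)) = gp I i j).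
  { replace (i * k + j + (Dv + 2 + k + n * k)) with (Dv + (2 + gk I + gn I * gk I + (i * gk I + j))) by (unfold kk, nn; lia).
    rewrite Hin by (unfold Ev, kk, nn in *; nia). apply init_p; auto; destruct Hvalid; tauto. }
  unfold INNER. stepsA. rewrite ?C3, ?C5, ?C6, ?C7, ?C8, ?C9, ?C12, ?C13, ?C14, ?R15, ?R16, ?R17, ?R18, ?R19, ?R23.
  rewrite ?HCj, ?Hsij.
  cbn [fb]. unfold binstep. rewrite digit_eq. unfold rr.
  ifA Hc; rewrite ?C3, ?C5, ?C6, ?C7, ?C8, ?C9, ?C12, ?C13, ?C14, ?R15, ?R16, ?R17, ?R18, ?R19, ?R23, ?HCj, ?Hsij in Hc.
  - rewrite Hc. cbn [Nat.eqb].
    stepsA. rewrite ?C3, ?C5, ?C6, ?C7, ?C8, ?C9, ?C12, ?C13, ?C14, ?R15, ?R16, ?R17, ?R18, ?R19, ?R23.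
    rewrite ?Hpij.
    set (r := gs I i j * LN I Nc / (N2 Nc * gC I j)) in *.
    assert (Hns : r * B ^ j + s < Sv).
    { unfold Sv. apply state_bound; auto. apply BB_pos.
      rewrite Nat.mod_eq by (pose proof (BB_pos I Nc); lia). assert (B = L + 1) by reflexivity. lia. }
    assert (HV : m (TVv + S i * Sv + (r * B ^ j + s)) = V I Nc (S i) (r * B ^ j + s)) by (apply Hl; auto).
    rewrite HV.
    ifA Hc2; rewrite ?R19 in Hc2.
    + rewrite Hc2. cbn [Nat.eqb]. unfold SKIP. stepsA. apply lastA; cbn [aeff]; simp_upd.
      rewrite ?R17, ?C9, ?R18, ?C5, ?R22, ?R19, ?R20, ?R21.
      split. split. lia. split. rewrite Nat.pow_succ_r'. lia. split. lia. auto. lia.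
    + replace (_ =? 0) with false by (symmetry; apply Nat.eqb_neq; exact Hc2).
      stepsA. apply lastA; cbn [aeff]; simp_upd. rewrite ?R17, ?C9, ?R18, ?C5, ?R22.
      unfold best, arg, nst; cbn [fst snd].
      split. split. lia. split. rewrite Nat.pow_succ_r'. lia. split. lia. split. lia. split; lia. lia.
  - replace (_ =? 0) with false by (symmetry; apply Nat.eqb_neq; exact Hc).
    unfold SKIP. stepsA. apply lastA; cbn [aeff]; simp_upd. rewrite ?R17, ?C9, ?R18, ?C5, ?R22, ?R19, ?R20, ?R21.
    split. split. lia. split. rewrite Nat.pow_succ_r'. lia. split. lia. auto. lia.
Qed.

Definition KEEP (z : nat) : Prop := z < 15 \/ z = 15 \/ z = 16 \/ z = 23 \/ z = 24 \/ z = 25 \/ z = 26 \/ 31 <= z.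

Lemma Cst_frame m m' : Cst m -> (forall z, z <> 2 -> KEEP z -> m' z = m z) -> Cst m'.
Proof. intros (C1 & C3 & C4 & C5 & C6 & C7 & C8 & C9 & C10 & C11 & C12 & C13 & C14 & C31) H.
  unfold Cst. rewrite !H by (unfold KEEP; lia). tauto. Qed.
Lemma Inp_frame m m' : Inp m -> (forall z, 32 <= z -> m' z = m z) -> Inp m'.
Proof. intros Hi H x Hx. rewrite H. apply Hi; auto. pose proof Dv_ge; lia. Qed.
Lemma Lay_frame i m m' : Lay i m -> (forall z, 32 <= z -> m' z = m z) -> Lay i m'.
Proof. intros Hi H x Hx. rewrite H. apply Hi; auto. unfold TVv; pose proof Dv_ge; lia. Qed.

Lemma body_spec m i s :
  Cst m -> Inp m -> Lay (S i) m -> i < n -> s < Sv -> m 15 = i -> m 16 = s ->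
  m 23 = TVv + S i * Sv ->
  exists m' t, exec BODY m m' t /\
    (m' 19 = best (fb I Nc i s (V I Nc (S i)) k) /\ m' 20 = arg (fb I Nc i s (V I Nc (S i)) k) /\
     m' 21 = nst (fb I Nc i s (V I Nc (S i)) k)) /\ t <= 10 + k * 56.
Proof.
  intros Hc Hin Hl Hi Hs R15 R16 R23.
  pose proof Dv_ge as HD. assert (HTV : 64 <= TVv) by (unfold TVv; lia).
  pose proof Hc as (C1 & C3 & C4 & C5 & C6 & C7 & C8 & C9 & C10 & C11 & C12 & C13 & C14 & C31).
  unfold BODY. stepsA. rewrite ?C3, ?R16, ?R23.
  match goal with |- exists _ _, exec _ ?mm _ _ /\ _ => set (m0 := mm) end.
  assert (F0 : forall z, z <> 2 -> KEEP z -> m0 z = m z).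
  { intros z Hz Hk. unfold m0. unfold KEEP in Hk. simp_upd. auto. }
  set (Inv := fun v (m1 : memory) => v <= k /\ (forall z, z <> 2 -> KEEP z -> m1 z = m z) /\
     m1 17 = k - v /\ m1 18 = B ^ (k - v) /\ m1 22 = v /\
     m1 19 = best (fb I Nc i s (V I Nc (S i)) (k - v)) /\ m1 20 = arg (fb I Nc i s (V I Nc (S i)) (k - v)) /\
     m1 21 = nst (fb I Nc i s (V I Nc (S i)) (k - v))).
  assert (HI : Inv k m0).
  { unfold Inv, m0. simp_upd. rewrite Nat.sub_diag. cbn [fb best arg nst fst snd].
    rewrite ?R16, ?R23. split. lia. split. { intros z Hz Hk. unfold KEEP in Hk. simp_upd. auto. }
    assert (HH : m (TVv + S i * Sv + s) = V I Nc (S i) s) by (apply Hl; auto). rewrite HH.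
    repeat split; auto. }
  assert (W1 : forall v m1, Inv v m1 -> (m1 22 = 0 <-> v = 0)).
  { intros v m1 (_ & _ & _ & _ & H & _). lia. }
  assert (W2 : forall v m1, Inv (S v) m1 -> exists m3 t3, exec INNER m1 m3 t3 /\ Inv v (upd m3 TR 0) /\ t3 <= 53).
  { intros v m1 (Hv & Hf & R17 & R18 & R22 & R19 & R20 & R21).
    assert (Hf32 : forall z, 32 <= z -> m1 z = m z) by (intros; apply Hf; unfold KEEP; lia).
    destruct (inner_step m1 i s (k - S v) v) as (m3 & t3 & E3 & (S17 & S18 & S22 & S19 & S20 & S21) & T3); auto.
    + apply (Cst_frame m); auto.
    + apply (Inp_frame m); auto.
    + apply (Lay_frame _ m); auto.
    + rewrite Hf; auto. unfold KEEP; lia.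
    + rewrite Hf; auto. unfold KEEP; lia.
    + rewrite Hf; auto. unfold KEEP; lia.
    + lia.
    + exists m3, t3. split; auto. split; [|lia].
      assert (Fr : forall z, ~ In z (wr INNER) -> m3 z = m1 z) by (apply exec_frame with t3; auto).
      replace (S (k - S v)) with (k - v) in * by lia.
      unfold Inv. simp_upd. split. lia. split.
      * intros z Hz Hk. simp_upd. rewrite Fr. apply Hf; auto. simpl. unfold KEEP in Hk. lia.
      * repeat split; auto. }
  destruct (while_rule 22 INNER Inv 53 W1 W2 k m0 HI) as (m2 & t2 & E2 & I2 & T2).
  - exists m2, t2. split; auto. destruct I2 as (_ & _ & _ & _ & _ & R19 & R20 & R21).
    rewrite Nat.sub_0_r in *. split. auto. lia.
Qed.

End Mach.

End MP.

Module MQ.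
Import MA.
Import MM.
Import MP.
Import ListNotations.
Local Open Scope nat_scope.

Section Mach2.
Variable I : gap_instance.
Variable Nc : nat.
Hypothesis Hvalid : valid_instance I.

Local Notation k := (kk I).
Local Notation n := (nn I).
Local Notation B := (BB I Nc).
Local Notation Sv := (Sv I Nc).
Local Notation TVv := (TVv I).
Local Notation Cst := (Cst I Nc).
Local Notation Inp := (Inp I).
Local Notation Lay := (Lay I Nc).

Definition LaysFrom a m := forall j, a <= j -> j <= n -> Lay j m.

Lemma Cst_frame2 m m' : Cst m -> (forall z, (z = 1 \/ (3 <= z <= 14) \/ z = 31) -> m' z = m z) -> Cst m'.
Proof. intros (C1 & C3 & C4 & C5 & C6 & C7 & C8 & C9 & C10 & C11 & C12 & C13 & C14 & C31) H.
  unfold MP.Cst. rewrite !H by lia. tauto. Qed.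

Lemma Inp_frame2 m m' : Inp m -> (forall z, Dv I <= z < Dv I + Ev I -> m' z = m z) -> Inp m'.
Proof. intros Hi H x Hx. rewrite H by lia. apply Hi; auto. Qed.

Lemma mid_step m i v :
  Cst m -> Inp m -> LaysFrom (S i) m -> i < n -> v < Sv ->
  m 15 = i -> m 16 = Sv - S v -> m 25 = S v -> m 23 = TVv + S i * Sv -> m 24 = TVv + i * Sv ->
  (forall s', s' < Sv - S v -> m (TVv + i * Sv + s') = V I Nc i s') ->
  exists m' t, exec MID m m' t /\
   (Cst m' /\ Inp m' /\ LaysFrom (S i) m' /\ m' 15 = i /\ m' 16 = Sv - v /\ m' 25 = v /\
    m' 23 = TVv + S i * Sv /\ m' 24 = TVv + i * Sv /\ m' 26 = m 26 /\
    (forall s', s' < Sv - v -> m' (TVv + i * Sv + s') = V I Nc i s') /\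
    (forall z, z < TVv + i * Sv -> 32 <= z -> m' z = m z) /\
    (forall z, TVv + S i * Sv <= z -> m' z = m z)) /\ t <= 15 + k * 56.
Proof.
  intros Hc Hin Hl Hi Hv R15 R16 R25 R23 R24 Hpart.
  pose proof (Dv_ge I Hvalid) as HD. assert (HTV : 64 <= TVv) by (unfold MP.TVv; lia).
  pose proof (Sv_pos I Nc) as HS.
  unfold MID.
  apply seqC with (R := fun m1 t1 => exec BODY m m1 t1 /\
      (m1 19 = best (fb I Nc i (Sv - S v) (V I Nc (S i)) k) /\ m1 20 = arg (fb I Nc i (Sv - S v) (V I Nc (S i)) k) /\
       m1 21 = nst (fb I Nc i (Sv - S v) (V I Nc (S i)) k)) /\ t1 <= 10 + k * 56).
  { destruct (body_spec I Nc Hvalid m i (Sv - S v)) as (m1 & t1 & E1 & H1 & T1); auto.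
    all: try (apply Hl; lia); try lia. exists m1, t1. auto. }
  intros m1 t1 (E1 & (R19 & _ & _) & T1).
  assert (Fr : forall z, ~ In z (wr BODY) -> m1 z = m z) by (apply exec_frame with t1; auto).
  assert (Fk : forall z, z <> 2 -> KEEP z -> m1 z = m z).
  { intros z Hz Hk. apply Fr. simpl. unfold KEEP in Hk. lia. }
  assert (F32 : forall z, 32 <= z -> m1 z = m z) by (intros; apply Fk; unfold KEEP; lia).
  pose proof (Cst_frame I Nc m m1 Hc Fk) as Hc1.
  pose proof Hc1 as (C1 & C3 & C4 & C5 & C6 & C7 & C8 & C9 & C10 & C11 & C12 & C13 & C14 & C31).
  rewrite <- (Fk 15) in R15 by (unfold KEEP; lia). rewrite <- (Fk 16) in R16 by (unfold KEEP; lia).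
  rewrite <- (Fk 25) in R25 by (unfold KEEP; lia). rewrite <- (Fk 23) in R23 by (unfold KEEP; lia).
  rewrite <- (Fk 24) in R24 by (unfold KEEP; lia).
  stepsA. apply lastA; cbn [aeff]; simp_upd.
  rewrite ?R24, ?R16, ?R19, ?R25, ?C9.
  assert (Hlt : i * Sv + (Sv - S v) < S i * Sv) by nia.
  split; [|lia].
  split. apply (Cst_frame2 m1); auto. intros z Hz. simp_upd. auto.
  split. apply (Inp_frame2 m); auto. intros z Hz. unfold MP.TVv in *. simp_upd. apply F32; lia.
  split. intros j Hj1 Hj2 s' Hs'. assert (j * Sv >= S i * Sv) by nia. simp_upd. rewrite F32 by lia. apply Hl; auto.
  simp_upd. split. auto. split. lia. split. lia. split. auto. split. auto. split. apply Fk; unfold KEEP; lia.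
  split. intros s' Hs'. destruct (Nat.eq_dec s' (Sv - S v)).
    subst s'. simp_upd. rewrite (V_S I Nc i) by auto. reflexivity.
    simp_upd. rewrite F32 by lia. apply Hpart. lia.
  split. intros z Hz1 Hz2. simp_upd. auto.
  intros z Hz. simp_upd. apply F32. lia.
Qed.


Lemma layer_step m v :
  Cst m -> Inp m -> LaysFrom (S v) m -> v < n -> m 26 = S v ->
  exists m' t, exec LAYER m m' t /\
   (Cst m' /\ Inp m' /\ LaysFrom v m' /\ m' 26 = v) /\ t <= 9 + Sv * (18 + k * 56).
Proof.
  intros Hc Hin Hl Hv R26.
  pose proof (Dv_ge I Hvalid) as HD. assert (HTV : 64 <= TVv) by (unfold MP.TVv; lia).
  pose proof (Sv_pos I Nc) as HS.
  pose proof Hc as (C1 & C3 & C4 & C5 & C6 & C7 & C8 & C9 & C10 & C11 & C12 & C13 & C14 & C31).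
  unfold LAYER. stepsA. rewrite ?R26, ?C9, ?C10, ?C11.
  match goal with |- exists _ _, exec (CSeq _ _) ?mm _ _ /\ _ => set (m0 := mm) end.
  set (Inv := fun u (m1 : memory) => u <= Sv /\ Cst m1 /\ Inp m1 /\ LaysFrom (S v) m1 /\ m1 15 = v /\
    m1 16 = Sv - u /\ m1 25 = u /\ m1 23 = TVv + S v * Sv /\ m1 24 = TVv + v * Sv /\ m1 26 = S v /\
    (forall s', s' < Sv - u -> m1 (TVv + v * Sv + s') = V I Nc v s')).
  assert (HI : Inv Sv m0).
  { unfold Inv, m0. simp_upd. split. lia. split. apply (Cst_frame2 m); auto. intros z Hz. simp_upd. auto.
    split. apply (Inp_frame2 m); auto. intros z Hz. unfold MP.TVv in *. simp_upd. auto.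
    split. intros j Hj1 Hj2 s' Hs'. simp_upd. apply Hl; auto.
    split. lia. split. lia. split. auto. split. nia. split. lia. split. auto.
    intros s' Hs'. lia. }
  assert (W1 : forall u m1, Inv u m1 -> (m1 25 = 0 <-> u = 0)).
  { intros u m1 (_ & _ & _ & _ & _ & _ & H & _). lia. }
  assert (W2 : forall u m1, Inv (S u) m1 -> exists m3 t3, exec MID m1 m3 t3 /\ Inv u (upd m3 TR 0) /\ t3 <= 15 + k * 56).
  { intros u m1 (Hu & Hc1 & Hin1 & Hl1 & R15 & R16 & R25 & R23 & R24 & R26' & Hp).
    destruct (mid_step m1 v u) as (m3 & t3 & E3 & (Hc3 & Hin3 & Hl3 & S15 & S16 & S25 & S23 & S24 & S26 & Hp3 & _ & _) & T3); auto; try lia.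
    exists m3, t3. split; auto. split; auto. unfold Inv. simp_upd. split. lia.
    split. apply (Cst_frame2 m3); auto. intros z Hz. simp_upd. auto.
    split. apply (Inp_frame2 m3); auto. intros z Hz. unfold MP.TVv in *. simp_upd. auto.
    split. intros j Hj1 Hj2 s' Hs'. simp_upd. apply Hl3; auto.
    split. auto. split. auto. split. auto. split. auto. split. auto. split. lia.
    intros s' Hs'. simp_upd. auto. }
  destruct (while_rule 25 MID Inv _ W1 W2 Sv m0 HI) as (m2 & t2 & E2 & I2 & T2).
  apply seqC with (R := fun m1 t1 => exec (CWhile 25 MID) m0 m1 t1 /\ Inv 0 m1 /\ t1 <= 1 + Sv * (15 + k * 56 + 3)).
  { exists m2, t2. auto. }
  intros m1 t1 (E1 & (_ & Hc1 & Hin1 & Hl1 & _ & _ & _ & _ & _ & R26' & Hp) & T1).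
  apply lastA; cbn [aeff]; simp_upd. pose proof Hc1 as (D1 & D3 & D4 & D5 & D6 & D7 & D8 & D9 & _).
  rewrite R26', D9.
  split; [|nia].
  split. apply (Cst_frame2 m1); auto. intros z Hz. simp_upd. auto.
  split. apply (Inp_frame2 m1); auto. intros z Hz. unfold MP.TVv in *. simp_upd. auto.
  split. intros j Hj1 Hj2 s' Hs'. simp_upd. destruct (Nat.eq_dec j v).
    subst j. apply Hp. lia. apply Hl1; lia.
  lia.
Qed.

Lemma dp_spec m :
  Cst m -> Inp m -> (forall z, TVv <= z -> m z = 0) ->
  exists m' t, exec DPC m m' t /\ (Cst m' /\ Inp m' /\ LaysFrom 0 m') /\
     t <= 3 + n * (12 + Sv * (18 + k * 56)).
Proof.
  intros Hc Hin Hz.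
  pose proof (Dv_ge I Hvalid) as HD. assert (HTV : 64 <= TVv) by (unfold MP.TVv; lia).
  pose proof Hc as (C1 & C3 & C4 & C5 & C6 & C7 & C8 & C9 & C10 & C11 & C12 & C13 & C14 & C31).
  unfold DPC. stepsA. rewrite ?C4.
  match goal with |- exists _ _, exec _ ?mm _ _ /\ _ => set (m0 := mm) end.
  set (Inv := fun v (m1 : memory) => v <= n /\ Cst m1 /\ Inp m1 /\ LaysFrom v m1 /\ m1 26 = v).
  assert (HI : Inv n m0).
  { unfold Inv, m0. simp_upd. split. lia. split. apply (Cst_frame2 m); auto. intros z Hz'. simp_upd. auto.
    split. apply (Inp_frame2 m); auto. intros z Hz'. unfold MP.TVv in *. simp_upd. auto.
    split. intros j Hj1 Hj2 s' Hs'. assert (j = n) by lia. subst j. simp_upd. rewrite Hz by lia.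
    rewrite V_n. auto. lia. }
  assert (W1 : forall u m1, Inv u m1 -> (m1 26 = 0 <-> u = 0)).
  { intros u m1 (_ & _ & _ & _ & H). lia. }
  assert (W2 : forall u m1, Inv (S u) m1 -> exists m3 t3, exec LAYER m1 m3 t3 /\ Inv u (upd m3 TR 0) /\
     t3 <= 9 + Sv * (18 + k * 56)).
  { intros u m1 (Hu & Hc1 & Hin1 & Hl1 & R26).
    destruct (layer_step m1 u) as (m3 & t3 & E3 & (Hc3 & Hin3 & Hl3 & S26) & T3); auto; try lia.
    exists m3, t3. split; auto. split; auto. unfold Inv. simp_upd. split. lia.
    split. apply (Cst_frame2 m3); auto. intros z Hz'. simp_upd. auto.
    split. apply (Inp_frame2 m3); auto. intros z Hz'. unfold MP.TVv in *. simp_upd. auto.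
    split. intros j Hj1 Hj2 s' Hs'. simp_upd. apply Hl3; auto. auto. }
  destruct (while_rule 26 LAYER Inv _ W1 W2 n m0 HI) as (m2 & t2 & E2 & (_ & I2) & T2).
  exists m2, t2. split; auto. split. tauto. nia.
Qed.

End Mach2.

End MQ.

Module MR.
Import MA.
Import MM.
Import MP.
Import MQ.
Import ListNotations.
Local Open Scope nat_scope.

Section Mach3.
Variable I : gap_instance.
Variable Nc : nat.
Hypothesis Hvalid : valid_instance I.

Local Notation k := (kk I).
Local Notation n := (nn I).
Local Notation B := (BB I Nc).
Local Notation Sv := (Sv I Nc).
Local Notation TVv := (TVv I).
Local Notation OBv := (OBv I Nc).
Local Notation Cst := (Cst I Nc).
Local Notation Inp := (Inp I).
Local Notation Lay := (Lay I Nc).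

Definition argv i := arg (fb I Nc i (rs I Nc i) (V I Nc (S i)) k).

Lemma rs_lt i : i <= n -> rs I Nc i < Sv.
Proof. intros Hi. destruct (rec_state I Nc i Hi) as [-> H]. unfold enc, MP.Sv.
  apply encb_lt. intros j Hj. specialize (H j Hj). unfold BB. lia. Qed.

Lemma recon_spec m :
  Cst m -> Inp m -> LaysFrom I Nc 0 m ->
  exists m' t, exec RECON m m' t /\ (Cst m' /\ forall i, i < n -> m' (OBv + i) = argv i) /\
     t <= 5 + n * (22 + k * 56).
Proof.
  intros Hc Hin Hl.
  pose proof (Dv_ge I Hvalid) as HD. assert (HTV : 64 <= TVv) by (unfold MP.TVv; lia).
  assert (HOB : TVv + (n + 1) * Sv = OBv) by reflexivity.
  pose proof (Sv_pos I Nc) as HS.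
  pose proof Hc as (C1 & C3 & C4 & C5 & C6 & C7 & C8 & C9 & C10 & C11 & C12 & C13 & C14 & C31).
  unfold RECON. stepsA. rewrite ?C4.
  match goal with |- exists _ _, exec _ ?mm _ _ /\ _ => set (m0 := mm) end.
  set (Inv := fun v (m1 : memory) => v <= n /\ Cst m1 /\ Inp m1 /\ LaysFrom I Nc 0 m1 /\ m1 26 = v /\
     m1 15 = n - v /\ m1 16 = rs I Nc (n - v) /\ forall i, i < n - v -> m1 (OBv + i) = argv i).
  assert (HI : Inv n m0).
  { unfold Inv, m0. simp_upd. split. lia. split. apply (Cst_frame2 I Nc m); auto. intros z Hz'. simp_upd. auto.
    split. apply (Inp_frame2 I m); auto. intros z Hz'. unfold MP.TVv in *. simp_upd. auto.
    split. intros j Hj1 Hj2 s' Hs'. unfold MP.TVv in *. simp_upd. apply Hl; auto.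
    split. auto. split. lia. split. rewrite Nat.sub_diag. reflexivity. intros; lia. }
  assert (W1 : forall u m1, Inv u m1 -> (m1 26 = 0 <-> u = 0)).
  { intros u m1 (_ & _ & _ & _ & H & _). lia. }
  assert (W2 : forall u m1, Inv (S u) m1 -> exists m3 t3, exec RBODY m1 m3 t3 /\ Inv u (upd m3 TR 0) /\
     t3 <= 19 + k * 56).
  { intros u m1 (Hu & Hc1 & Hin1 & Hl1 & R26 & R15 & R16 & Hout).
    set (i := n - S u) in *.
    assert (Hi : i < n) by lia.
    pose proof Hc1 as (D1 & D3 & D4 & D5 & D6 & D7 & D8 & D9 & D10 & D11 & D12 & D13 & D14 & D31).
    unfold RBODY. stepA; simp_upd. stepA; simp_upd. stepA; simp_upd.
    rewrite ?R15, ?D10, ?D11.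
    match goal with |- exists _ _, exec _ ?mm _ _ /\ _ => set (m2 := mm) end.
    assert (Fm2 : forall z, z <> 23 -> z <> 24 -> m2 z = m1 z) by (intros z Hz1 Hz2; unfold m2; simp_upd; auto).
    assert (Hc2 : Cst m2) by (apply (Cst_frame2 I Nc m1); auto; intros z Hz; apply Fm2; lia).
    assert (Hin2 : Inp m2) by (apply (Inp_frame2 I m1); auto; intros z Hz; apply Fm2; lia).
    assert (Hl2 : Lay (S i) m2).
    { intros s' Hs'. rewrite Fm2 by (unfold MP.TVv in *; lia). apply Hl1; lia. }
    assert (Hrs : rs I Nc i < Sv) by (apply rs_lt; lia).
    apply seqC with (R := fun m3 t1 => exec BODY m2 m3 t1 /\
      (m3 19 = best (fb I Nc i (rs I Nc i) (V I Nc (S i)) k) /\ m3 20 = arg (fb I Nc i (rs I Nc i) (V I Nc (S i)) k) /\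
       m3 21 = nst (fb I Nc i (rs I Nc i) (V I Nc (S i)) k)) /\ t1 <= 10 + k * 56).
    { destruct (body_spec I Nc Hvalid m2 i (rs I Nc i)) as (m3 & t3 & E3 & H3 & T3); auto.
      all: try (unfold m2; simp_upd; rewrite ?R15, ?R16; try reflexivity; nia). exists m3, t3. auto. }
    intros m3 t1 (E1 & (_ & R20 & R21) & T1).
    assert (Fr : forall z, ~ In z (wr BODY) -> m3 z = m2 z) by (apply exec_frame with t1; auto).
    assert (Fk : forall z, z <> 2 -> KEEP z -> m3 z = m2 z).
    { intros z Hz Hk. apply Fr. simpl. unfold KEEP in Hk. lia. }
    assert (F32 : forall z, 32 <= z -> m3 z = m2 z) by (intros; apply Fk; unfold KEEP; lia).
    pose proof (Cst_frame I Nc m2 m3 Hc2 Fk) as Hc3.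
    pose proof Hc3 as (E1' & E3' & E4' & E5' & E6' & E7' & E8' & E9' & E10' & E11' & E12' & E13' & E14' & E31').
    assert (S15 : m3 15 = i) by (rewrite Fk by (unfold KEEP; lia); unfold m2; simp_upd; auto).
    assert (S26 : m3 26 = S u) by (rewrite Fk by (unfold KEEP; lia); unfold m2; simp_upd; auto).
    stepsA. apply lastA; cbn [aeff]; simp_upd.
    rewrite ?E31', ?S15, ?R20, ?R21, ?E9', ?S26.
    split; [|lia]. unfold Inv. simp_upd.
    assert (HOi : TVv + (n + 1) * Sv + i >= TVv + (n+1) * Sv) by lia.
    split. lia.
    split. apply (Cst_frame2 I Nc m3); auto. intros z Hz. unfold MP.TVv, MP.OBv in *. simp_upd. auto.
    assert (Hin3 : Inp m3) by (apply (Inp_frame2 I m2); auto; intros z Hz; apply F32; lia).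
    split. apply (Inp_frame2 I m3); auto. intros z Hz. unfold MP.OBv, MP.TVv in *. simp_upd. auto.
    split. intros j Hj1 Hj2 s' Hs'. assert (j * Sv + s' < (n + 1) * Sv) by nia.
      unfold MP.OBv in *. simp_upd. rewrite F32 by lia. rewrite Fm2 by lia. apply Hl1; lia.
    split. lia. split. lia. split. replace (n - u) with (S i) by lia. reflexivity.
    intros i' Hi'. destruct (Nat.eq_dec i' i).
    - subst i'. simp_upd. reflexivity.
    - simp_upd. rewrite F32 by lia. rewrite Fm2 by lia. apply Hout. lia. }
  destruct (while_rule 26 RBODY Inv _ W1 W2 n m0 HI) as (m2 & t2 & E2 & (_ & I2) & T2).
  exists m2, t2. split; auto. split. split. tauto. intros i Hi. apply I2. lia. nia.
Qed.

End Mach3.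

End MR.

Module MS.
Import MA.
Import MM.
Import MP.
Import MQ.
Import MR.
Import ListNotations.
Local Open Scope nat_scope.

Section Mach4.
Variable I : gap_instance.
Variable Nc : nat.
Hypothesis Hvalid : valid_instance I.

Local Notation k := (kk I).
Local Notation n := (nn I).
Local Notation B := (BB I Nc).
Local Notation Sv := (Sv I Nc).
Local Notation TVv := (TVv I).
Local Notation OBv := (OBv I Nc).
Local Notation Cst := (Cst I Nc).
Local Notation Inp := (Inp I).
Local Notation Dv := (Dv I).
Local Notation Ev := (Ev I).

Lemma setup_spec m :
  m 1 = Dv -> Inp m -> (forall z, TVv <= z -> m z = 0) ->
  exists m' t, exec (SETUP Nc) m m' t /\ (Cst m' /\ Inp m' /\ forall z, TVv <= z -> m' z = 0) /\
    t <= 40 + k * 5.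
Proof.
  intros R1 Hin Hz.
  pose proof (Dv_ge I Hvalid) as HD. assert (HTV : 64 <= TVv) by (unfold MP.TVv; lia).
  assert (HE : 5 <= Ev) by (destruct Hvalid as (A & B' & _); unfold MP.Ev, kk, nn; nia).
  assert (M0 : m Dv = k) by (rewrite <- (Nat.add_0_r Dv) at 1; rewrite Hin by lia; reflexivity).
  assert (M1 : m (Dv + 1) = n) by (rewrite Hin by lia; reflexivity).
  unfold SETUP. stepsA. rewrite ?R1, ?M0, ?M1.
  match goal with |- exists _ _, exec (CSeq _ _) ?mm _ _ /\ _ => set (m0 := mm) end.
  set (Inv := fun v (m1 : memory) => v <= k /\ (forall z, z <> 2 -> z <> 10 -> z <> 22 -> m1 z = m0 z) /\
     m1 10 = B ^ (k - v) /\ m1 22 = v).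
  assert (HI : Inv k m0).
  { unfold Inv, m0. simp_upd. rewrite Nat.sub_diag. split. lia. split. auto. auto. }
  assert (W1 : forall u m1, Inv u m1 -> (m1 22 = 0 <-> u = 0)).
  { intros u m1 (_ & _ & _ & H). lia. }
  assert (W2 : forall u m1, Inv (S u) m1 -> exists m3 t3, exec (AMul 10 10 5 ;; ASub 22 22 9) m1 m3 t3 /\
      Inv u (upd m3 TR 0) /\ t3 <= 2).
  { intros u m1 (Hu & Hf & R10 & R22).
    assert (R5 : m1 5 = B) by (rewrite Hf by lia; unfold m0; simp_upd; reflexivity).
    assert (R9 : m1 9 = 1) by (rewrite Hf by lia; unfold m0; simp_upd; reflexivity).
    stepA; simp_upd. apply lastA; cbn [aeff]. unfold Inv. simp_upd. rewrite R10, R5, R9, R22.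
    split; [|lia]. split. lia. split. intros z Hz1 Hz2 Hz3. simp_upd. auto.
    split. replace (k - u) with (S (k - S u)) by lia. rewrite Nat.pow_succ_r'. lia. lia. }
  destruct (while_rule 22 _ Inv _ W1 W2 k m0 HI) as (m2 & t2 & E2 & (_ & Hf & R10 & _) & T2).
  apply seqC with (R := fun m1 t1 => exec (CWhile 22 (AMul 10 10 5 ;; ASub 22 22 9)) m0 m1 t1 /\
     (forall z, z <> 2 -> z <> 10 -> z <> 22 -> m1 z = m0 z) /\ m1 10 = B ^ k /\ t1 <= 1 + k * 5).
  { exists m2, t2. rewrite Nat.sub_0_r in R10. split; [auto|]. split; [auto|]. split; [auto|lia]. }
  intros m1 t1 (E1 & Hf1 & R10' & T1).
  assert (G : forall z, z <> 2 -> z <> 10 -> z <> 22 -> z < 32 \/ z >= 32) by lia.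
  stepsA. apply lastA; cbn [aeff]. simp_upd. rewrite !Hf1 by lia. unfold m0. simp_upd.
  rewrite ?R1, ?M0, ?M1, R10'.
  split; [|lia].
  split. unfold MP.Cst. simp_upd.
    repeat match goal with |- context [m1 ?z] => rewrite (Hf1 z) by lia end.
    unfold m0. simp_upd. rewrite ?R1, ?M0, ?M1.
    repeat split; auto; try lia; unfold MP.TVv, MP.Ev, MP.OBv, MP.TVv, MP.Ev, MP.Sv; try reflexivity; try lia.
  split. intros x Hx. simp_upd. rewrite (Hf1 (Dv + x)) by lia. unfold m0. simp_upd. auto.
  intros z Hz'. unfold MP.TVv, MP.Ev in *. simp_upd. rewrite (Hf1 z) by lia. unfold m0. simp_upd. auto.
Qed.

End Mach4.

End MS.

Module MT.
Import MA.
Import MM.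
Import MP.
Import MQ.
Import MR.
Import MS.
Import ListNotations.
Local Open Scope nat_scope.

Section Mach5.
Variable I : gap_instance.
Variable Nc : nat.
Hypothesis Hvalid : valid_instance I.

Local Notation k := (kk I).
Local Notation n := (nn I).
Local Notation Sv := (Sv I Nc).
Local Notation TVv := (TVv I).
Local Notation OBv := (OBv I Nc).
Local Notation Cst := (Cst I Nc).
Local Notation Inp := (Inp I).
Local Notation Dv := (Dv I).
Local Notation Ev := (Ev I).

Lemma dbl x : x + x = 2 * x. Proof. lia. Qed.

Lemma final_spec m :
  Cst m -> (forall i, i < n -> m (OBv + i) = argv I Nc i) ->
  exists m' t, exec FINAL m m' t /\ (forall i, i < n -> m' (Ev + i) = argv I Nc i) /\ t <= 11 + n * 8.
Proof.
  intros Hc Hob.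
  pose proof (Dv_ge I Hvalid) as HD.
  assert (HE : 5 <= Ev) by (destruct Hvalid as (A & B' & _); unfold MP.Ev, kk, nn; nia).
  assert (HOB : Dv + Ev <= OBv) by (unfold MP.OBv, MP.TVv; lia).
  assert (HnD : n <= Dv) by (destruct Hvalid as (A & B' & _); unfold MP.Dv, kk, nn in *; nia).
  pose proof Hc as (C1 & C3 & C4 & C5 & C6 & C7 & C8 & C9 & C10 & C11 & C12 & C13 & C14 & C31).
  unfold FINAL. stepsA. rewrite ?C1, ?C4, ?C11, ?C31.
  match goal with |- exists _ _, exec _ ?mm _ _ /\ _ => set (m0 := mm) end.
  set (Inv := fun v (m1 : memory) => v <= n /\ m1 3 = v /\ m1 4 = OBv + (n - v) /\ m1 0 = Ev + (n - v) /\
     m1 1 = 1 /\ (forall i, i < n - v -> m1 (Ev + i) = argv I Nc i) /\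
     (forall i, i < n -> m1 (OBv + i) = argv I Nc i)).
  assert (HI : Inv n m0).
  { unfold Inv, m0. simp_upd. rewrite Nat.sub_diag. split. lia. split. lia. split. lia. split.
    unfold MP.TVv. lia. split. auto. split. intros; lia. intros i Hi. simp_upd. auto. }
  assert (W1 : forall u m1, Inv u m1 -> (m1 3 = 0 <-> u = 0)).
  { intros u m1 (_ & H & _). lia. }
  assert (W2 : forall u m1, Inv (S u) m1 -> exists m3 t3,
      exec (ALoad 2 4 ;; AStore 0 2 ;; AAdd 4 4 1 ;; AAdd 0 0 1 ;; ASub 3 3 1) m1 m3 t3 /\
      Inv u (upd m3 TR 0) /\ t3 <= 5).
  { intros u m1 (Hu & R3 & R4 & R0 & R1 & Ho & Hb).
    stepsA. apply lastA; cbn [aeff]. unfold Inv. simp_upd. rewrite ?R0, ?R1, ?R3, ?R4.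
    split; [|lia]. split. lia. split. lia. split. lia. split. lia. split. auto.
    split. { intros i Hi. destruct (Nat.eq_dec i (n - S u)).
    - subst i. simp_upd. apply Hb. lia.
    - simp_upd. apply Ho. lia. }
    intros i Hi. simp_upd. auto. }
  destruct (while_rule 3 _ Inv _ W1 W2 n m0 HI) as (m2 & t2 & E2 & (_ & _ & _ & _ & _ & Ho & _) & T2).
  exists m2, t2. split; auto. split. intros i Hi. apply Ho. lia. lia.
Qed.


Lemma phase0_spec m :
  (forall x, m x = init_memory I x) ->
  exists m' t, exec PHASE0 m m' t /\ (m' 1 = Dv /\ Inp m' /\ forall z, TVv <= z -> m' z = 0) /\
    t <= 42 + Ev * 8.
Proof.
  intros Hm.
  pose proof (Dv_ge I Hvalid) as HD.
  assert (HE : 5 <= Ev) by (destruct Hvalid as (A & B' & _); unfold MP.Ev, kk, nn; nia).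
  assert (HED : Ev + 7 <= Dv) by (destruct Hvalid as (A & B' & _); unfold MP.Dv, MP.Ev, kk, nn in *; nia).
  assert (R0 : m 0 = k) by (rewrite Hm; reflexivity).
  assert (R1 : m 1 = n) by (rewrite Hm; reflexivity).
  assert (HDv : 2 * (2 * (2 * (2 * (2 * (2 * (n * k)))))) = Dv) by (unfold MP.Dv; lia).
  unfold PHASE0.
  stepA; simp_upd. rewrite R1, R0.
  do 6 (stepA; simp_upd; rewrite ?dbl).
  rewrite HDv.
  stepsA. rewrite ?R0, ?HDv.
  assert (Hn : Dv / (64 * k) = n).
  { unfold MP.Dv. replace (64 * (n * k)) with (n * (64 * k)) by lia. apply Nat.div_mul.
    destruct Hvalid as (A & _); unfold kk in *; lia. }
  rewrite Hn.
  match goal with |- exists _ _, exec _ ?mm _ _ /\ _ => set (m0 := mm) end.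
  set (c0 := n * k + n * k + k + 2 - 7).
  assert (Hc0 : c0 = Ev - 7) by (unfold c0, MP.Ev; lia).
  set (Inv := fun v (m1 : memory) => v <= c0 /\ m1 1 = Dv /\ m1 3 = v /\ m1 4 = 7 + (c0 - v) /\
     m1 5 = Dv + 7 + (c0 - v) /\ m1 6 = 1 /\
     (forall x, x < 7 + (c0 - v) -> m1 (Dv + x) = init_memory I x) /\
     (forall x, 7 <= x < Dv -> m1 x = init_memory I x) /\
     (forall z, Dv + Ev + 7 <= z -> m1 z = 0)).
  assert (HI : Inv c0 m0).
  { unfold Inv, m0. simp_upd. rewrite Nat.sub_diag. split. lia. split. auto. split. unfold c0; lia.
    split. lia. split. lia. split. auto.
    split. intros x Hx.
    assert (x = 0 \/ x = 1 \/ x = 2 \/ x = 3 \/ x = 4 \/ x = 5 \/ x = 6) as Hx' by lia.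
    destruct Hx' as [-> | [-> | [-> | [-> | [-> | [-> | ->]]]]]]; simp_upd; rewrite ?Hm; auto.
    split. intros x Hx. simp_upd. auto.
    intros z Hz. simp_upd. rewrite Hm. apply init_hi. unfold MP.Ev, kk, nn in *. lia. }
  assert (W1 : forall u m1, Inv u m1 -> (m1 3 = 0 <-> u = 0)).
  { intros u m1 (_ & _ & H & _). lia. }
  assert (W2 : forall u m1, Inv (S u) m1 -> exists m3 t3,
      exec (ALoad 2 4 ;; AStore 5 2 ;; AAdd 4 4 6 ;; AAdd 5 5 6 ;; ASub 3 3 6) m1 m3 t3 /\
      Inv u (upd m3 TR 0) /\ t3 <= 5).
  { intros u m1 (Hu & R1' & R3 & R4 & R5 & R6 & Hcp & Hsrc & Hhi).
    stepsA. apply lastA; cbn [aeff]. unfold Inv. simp_upd. rewrite ?R1', ?R3, ?R4, ?R5, ?R6.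
    split; [|lia]. split. lia. split. auto. split. lia. split. lia. split. lia. split. auto.
    split. { intros x Hx. destruct (Nat.eq_dec x (7 + (c0 - S u))).
      - subst x. simp_upd. apply Hsrc. lia.
      - simp_upd. apply Hcp. lia. }
    split. { intros x Hx. simp_upd. auto. }
    intros z Hz. simp_upd. auto. }
  destruct (while_rule 3 _ Inv _ W1 W2 c0 m0 HI) as (m2 & t2 & E2 & (_ & F1 & _ & _ & _ & _ & Hcp & _ & Hhi) & T2).
  exists m2, t2. split; auto. split. split. auto. split.
  intros x Hx. apply Hcp. lia.
  intros z Hz. apply Hhi. unfold MP.TVv in Hz. lia.
  lia.
Qed.

End Mach5.

End MT.

Module MU.
Import MA.
Import MM.
Import MP.
Import MQ.
Import MR.
Import MS.
Import MT.
Import ListNotations.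
Local Open Scope nat_scope.

Lemma main_spec I Nc : valid_instance I ->
  exists m' t, exec (MAIN Nc) (init_memory I) m' t /\
    (forall i, i < nn I -> m' (Ev I + i) = argv I Nc i) /\
    t <= 400 * nn I * kk I * Sv I Nc.
Proof.
  intros Hv.
  destruct (phase0_spec I Hv (init_memory I)) as (m1 & t1 & E1 & (A1 & A2 & A3) & T1); auto.
  destruct (setup_spec I Nc Hv m1) as (m2 & t2 & E2 & (B1 & B2 & B3) & T2); auto.
  destruct (dp_spec I Nc Hv m2) as (m3 & t3 & E3 & (C1 & C2 & C3) & T3); auto.
  destruct (recon_spec I Nc Hv m3) as (m4 & t4 & E4 & (D1 & D2) & T4); auto.
  destruct (final_spec I Nc Hv m4) as (m5 & t5 & E5 & F1 & T5); auto.
  exists m5, (t1 + (t2 + (t3 + (t4 + t5)))). split.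
  { unfold MAIN. repeat (eapply ex_seq; eauto). }
  split. auto.
  pose proof (Sv_pos I Nc) as HS.
  destruct Hv as (Hk & Hn & _). unfold MP.Ev in *. unfold kk, nn in *.
  set (n := gn I) in *. set (k := gk I) in *. set (S := MP.Sv I Nc) in *.
  replace ((2 + k + 2 * n * k) * 8) with (16 + 8 * k + 16 * (n * k)) in T1 by ring.
  replace (n * (12 + S * (18 + k * 56))) with (12 * n + 18 * (n * S) + 56 * (n * k * S)) in T3 by ring.
  replace (n * (22 + k * 56)) with (22 * n + 56 * (n * k)) in T4 by ring.
  replace (400 * n * k * S) with (400 * (n * k * S)) by ring.
  assert (1 <= n * k) by nia.
  assert (n * k <= n * k * S) by nia. assert (n <= n * k) by nia. assert (k <= n * k) by nia.
  assert (n * S <= n * k * S) by nia.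
  lia.
Qed.

End MU.

Module MW1.
Import MA.
Import MM.
Import MP.
Import MQ.
Import MR.
Import MS.
Import MT.
Import MU.
Import ListNotations.
Local Open Scope nat_scope.

Definition prog (Nc : nat) : program := compile (MAIN Nc) 0 ++ [IHalt].

Lemma prog_run I Nc : valid_instance I ->
  exists t m', run (prog Nc) t (0%nat, init_memory I) = (len (MAIN Nc), m') /\
    halted (prog Nc) (len (MAIN Nc), m') /\
    (forall i, (i < nn I)%nat -> m' (Ev I + i)%nat = argv I Nc i) /\
    (t <= 400 * nn I * kk I * Sv I Nc)%nat.
Proof.
  intros Hv. destruct (main_spec I Nc Hv) as (m' & t & E & H1 & H2).
  exists t, m'. split; [|split; [|split; auto]].
  - apply (comp_correct _ _ _ _ E (prog Nc) 0).
    intros i x Hx. unfold prog. change (0 + i)%nat with i. rewrite nth_error_app1; auto.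
    apply nth_error_Some. congruence.
  - unfold halted. cbv beta iota zeta delta [step]. unfold prog.
    rewrite nth_error_app2; rewrite comp_len; [|lia].
    rewrite Nat.sub_diag. reflexivity.
Qed.

Section Agree.
Variable I : gap_instance.
Variables a a' : assignment.
Hypothesis Hag : forall i, (i < gn I)%nat -> a i = a' i.
Lemma agree_profit : profit I a = profit I a'.
Proof. unfold profit. apply sum_ext. intros i Hi. rewrite Hag; auto. Qed.
Lemma agree_load j : bin_load I a j = bin_load I a' j.
Proof. unfold bin_load. apply sum_ext. intros i Hi. unfold in_bin. rewrite Hag; auto. Qed.
Lemma agree_ok : bins_ok I a' -> bins_ok I a.
Proof. intros H i j Hi E. apply (H i j Hi). rewrite <- Hag; auto. Qed.
End Agree.


End MW1.

Module MW2.
Import MA.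
Import MM.
Import MP.
Import MQ.
Import MR.
Import MS.
Import MT.
Import MU.
Import MW1.


Lemma kq_bound (q : R) (k : nat) : 0 <= q < 1 -> INR k * q ^ k <= 1 / (1 - q).
Proof.
  intros [H0 H1]. induction k.
  - simpl. assert (0 < 1 / (1 - q)) by (apply Rdiv_lt_0_compat; lra). lra.
  - rewrite S_INR. simpl.
    assert (E : (INR k + 1) * (q * q ^ k) = q * (INR k * q ^ k) + q * q ^ k) by ring.
    rewrite E.
    assert (q ^ k <= 1) by (rewrite <- (pow1 k); apply pow_incr; lra).
    assert (0 <= q ^ k) by (apply pow_le; lra).
    assert (q * (INR k * q ^ k) <= q * (1 / (1 - q))) by (apply Rmult_le_compat_l; lra).
    assert (q * q ^ k <= q) by nra.
    assert (q * (1 / (1 - q)) + q <= 1 / (1 - q)).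
    { unfold Rdiv. rewrite Rmult_1_l. apply Rmult_le_reg_r with (1 - q). lra.
      rewrite Rmult_plus_distr_r, Rmult_assoc, Rinv_l by lra. nra. }
    lra.
Qed.

Lemma BB_le I Nc : valid_instance I -> (2 * BB I Nc <= nn I * Nat.max Nc 2)%nat.
Proof.
  intros (Hk & Hn & _). unfold BB, LL. unfold nn in *.
  pose proof (Nat.Div0.mul_div_le ((gn I - 1) * Nc) 2).
  assert ((gn I - 1) * Nc <= (gn I - 1) * Nat.max Nc 2)%nat by (apply Nat.mul_le_mono_l; lia).
  assert (2 <= Nat.max Nc 2)%nat by lia.
  replace (gn I * Nat.max Nc 2)%nat with ((gn I - 1) * Nat.max Nc 2 + Nat.max Nc 2)%nat by
    (destruct (gn I); [lia|]; simpl; lia).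
  lia.
Qed.


End MW2.

Import MA.
Import MM.
Import MP.
Import MQ.
Import MR.
Import MS.
Import MT.
Import MU.
Import MW1 MW2.

Theorem mainTheorem13 :
  forall eps : R, 0 < eps ->
  exists (P : program) (c : R), 0 < c /\
    forall I : gap_instance, valid_instance I ->
      exists t : nat,
        halted P (run P t (0%nat, init_memory I)) /\
        INR t <= c * ((1 + eps) / eps) ^ gk I * INR (gn I) ^ (gk I + 1) /\
        let a := decode I (snd (run P t (0%nat, init_memory I))) in
        feasible_relaxed eps I a /\
        forall b : assignment, feasible I b -> (profit I b <= profit I a)%nat.
Proof.
  intros eps He.
  assert (H2e : 0 < 2 / eps) by (apply Rdiv_lt_0_compat; lra).
  destruct (archimed (2 / eps)) as [Hu1 Hu2].
  set (z := up (2 / eps)) in *.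
  assert (Hz0 : (0 <= z)%Z) by (apply le_IZR; lra).
  set (Nc := Z.to_nat z).
  assert (HN : INR Nc = IZR z) by (unfold Nc; rewrite INR_IZR_INZ, Z2Nat.id; auto).
  set (A := (1 + eps) / eps).
  assert (HA : A = 1 + 1 / eps) by (unfold A; field; lra).
  assert (Hie : 0 < 1 / eps) by (apply Rdiv_lt_0_compat; lra).
  set (M := Nat.max Nc 2).
  set (rho := INR M / 2).
  assert (Hrho1 : 1 <= rho).
  { unfold rho. assert (INR 2 <= INR M) by (apply le_INR; unfold M; lia). simpl in H. lra. }
  assert (Hrho2 : rho < A).
  { unfold rho, M. rewrite HA. destruct (Nat.max_spec Nc 2) as [[_ Hm]|[_ Hm]]; rewrite Hm.
    - simpl. lra.
    - rewrite HN. assert (2 / eps = 2 * (1 / eps)) by (field; lra). lra. }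
  assert (HA0 : 0 < A) by lra.
  set (q := rho / A).
  assert (Hq0 : 0 <= q) by (unfold q; apply Rlt_le, Rdiv_lt_0_compat; lra).
  assert (Hq1 : q < 1) by (unfold q; apply (Rmult_lt_reg_r A); [lra|]; unfold Rdiv; rewrite Rmult_assoc, Rinv_l; lra).
  assert (Hrq : rho = q * A) by (unfold q; field; lra).
  exists (prog Nc), (400 / (1 - q)). split.
  { apply Rdiv_lt_0_compat; lra. }
  intros I Hv. destruct (prog_run I Nc Hv) as (t & m' & Hrun & Hh & Hout & Ht).
  exists t. rewrite Hrun. split; auto. split.
  -
    set (n := gn I) in *. set (k := gk I) in *.
    apply le_INR in Ht. rewrite !mult_INR in Ht.
    unfold Sv in Ht. rewrite pow_INR in Ht.
    pose proof (BB_le I Nc Hv) as HB. apply le_INR in HB. rewrite !mult_INR in HB.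
    fold M in HB. unfold nn in HB. fold n in HB.
    assert (HB2 : INR (BB I Nc) <= INR n * rho) by (unfold rho; simpl in HB; lra).
    assert (Hpk : INR (BB I Nc) ^ kk I <= (INR n * rho) ^ k).
    { apply pow_incr. split. apply pos_INR. exact HB2. }
    unfold kk in Hpk. fold k in Hpk.
    rewrite Rpow_mult_distr, Hrq, Rpow_mult_distr in Hpk.
    pose proof (kq_bound q k (conj Hq0 Hq1)) as Hkq.
    assert (Hn0 : 0 <= INR n) by apply pos_INR.
    assert (Hk0 : 0 <= INR k) by apply pos_INR.
    assert (P1 : 0 <= INR n ^ k) by (apply pow_le; lra).
    assert (P2 : 0 <= A ^ k) by (apply pow_le; lra).
    assert (P3 : 0 <= q ^ k) by (apply pow_le; lra).
    unfold nn, kk in Ht. fold n k in Ht.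
    replace (INR 400) with 400 in Ht by (simpl; lra).
    rewrite pow_add, pow_1.
    assert (E : 400 * INR n * INR k * (INR n ^ k * (q ^ k * A ^ k)) =
                400 * (INR k * q ^ k) * A ^ k * (INR n ^ k * INR n)) by ring.
    assert (INR t <= 400 * INR n * INR k * (INR n ^ k * (q ^ k * A ^ k))).
    { apply Rle_trans with (1 := Ht). apply Rmult_le_compat_l; [|exact Hpk].
      apply Rmult_le_pos; [apply Rmult_le_pos|]; lra. }
    rewrite E in H.
    apply Rle_trans with (1 := H).
    assert (Q : 0 <= A ^ k * (INR n ^ k * INR n)) by (apply Rmult_le_pos; [lra| apply Rmult_le_pos; lra]).
    replace (400 / (1 - q) * A ^ k * (INR n ^ k * INR n)) with (400 * (1 / (1 - q)) * (A ^ k * (INR n ^ k * INR n))) by (field; lra).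
    replace (400 * (INR k * q ^ k) * A ^ k * (INR n ^ k * INR n)) with (400 * (INR k * q ^ k) * (A ^ k * (INR n ^ k * INR n))) by ring.
    apply Rmult_le_compat_r; [exact Q|]. lra.
  - cbv zeta. simpl snd.
    assert (Hag : forall i, (i < gn I)%nat -> decode I m' i = asg I Nc i).
    { intros i Hi. unfold decode. change (output_base I) with (Ev I). rewrite Hout by exact Hi.
      reflexivity. }
    split.
    + split. apply (agree_ok I _ _ Hag). apply asg_ok.
      intros j Hj. rewrite (agree_load I _ _ Hag).
      pose proof (asg_load I Nc Hv j Hj) as HL.
      assert (HC : (1 <= gC I j)%nat) by (destruct Hv as (_ & _ & HC); auto).
      apply le_INR in HL. rewrite !mult_INR in HL. unfold N2 in HL. rewrite plus_INR in HL. simpl in HL.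
      set (ld := INR (bin_load I (asg I Nc) j)) in *. set (Cj := INR (gC I j)) in *.
      assert (HNp : 0 < INR Nc) by lra.
      assert (0 <= Cj) by apply pos_INR.
      assert (ld <= (1 + 2 / INR Nc) * Cj).
      { apply Rmult_le_reg_r with (INR Nc). lra.
        replace ((1 + 2 / INR Nc) * Cj * INR Nc) with ((INR Nc + (1 + 1)) * Cj) by (field; lra). lra. }
      assert (2 / INR Nc < eps).
      { apply Rmult_lt_reg_r with (INR Nc). lra. unfold Rdiv. rewrite Rmult_assoc, Rinv_l by lra.
        assert (2 = eps * (2 / eps)) by (field; lra). nra. }
      assert ((1 + 2 / INR Nc) * Cj <= (1 + eps) * Cj) by (apply Rmult_le_compat_r; lra).
      lra.
    + intros b Hb. rewrite (agree_profit I _ _ Hag). apply asg_profit; auto.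
Qed.
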